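(* Let $\{F_y\}_{y\in P}$ be a family of $d$-IEMs on $\mathbb{S}^1$ with fixed combinatorics, elemental subintervals $J_\alpha(y)$ and translation amounts $\omega_\alpha(y)$ depending $C^1$ on $y$, let $f$ be a smooth $1$-periodic function, and $T_\varepsilon(x,y)=(F_y(x),\,y+\varepsilon f(F_y(x)))$. Let $X^*=\{(x_k^*,y_0^* )\}_{k=0}^{q-1}$, $x_k^*=F_{y_0^*}^k(x_0^* )$, be a $q$-periodic orbit of $T_0$ with $y_0^*$ in the interior of $P$ and each $x_k^*$ in the interior of an elemental subinterval $J_{\alpha_k}(y_0^* )$. Set $$M(X^* )=\Big(\sum_{k=0}^{q-1}f'(x_k^* )\Big)\Big(\sum_{k=0}^{q-1}\omega'_{\alpha_k}(y_0^* )\Big).$$ (i) If $\sum_{k=0}^{q-1}f(x_k^* )=0$ and $M(X^* )\neq 0$, then there exist $\varepsilon_0>0$ and a neighborhood $U$ of $(x_0^*,y_0^* )$ such that for every $0<|\varepsilon|<\varepsilon_0$ the map $T_\varepsilon$ has exactly one point $(x_0^\varepsilon,y_0^\varepsilon)\in U$ with $T_\varepsilon^q(x_0^\varepsilon,y_0^\varepsilon)=(x_0^\varepsilon,y_0^\varepsilon)$; it depends continuously on $\varepsilon$ and tends to $(x_0^*,y_0^* )$ as $\varepsilon\to0$. (ii) If $\sum_{k=0}^{q-1}f(x_k^* )\neq 0$, then there exist $\varepsilon_0>0$ and a neighborhood $U$ of $(x_0^*,y_0^* )$ such that for $0<|\varepsilon|<\varepsilon_0$ no point of $U$ satisfies 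$T_\varepsilon^q(p)=p$.
   Context: A $d$-IEM on $\mathbb{S}^1=\mathbb{R}/\mathbb{Z}$ (identified with $[0,1)$) translates each of $d$ consecutive left-closed right-open elemental subintervals $J_\alpha$; here $F_y(x)=x+\omega_\alpha(y)$ for $x\in J_\alpha(y)$, with the endpoints of the $J_\alpha(y)$ and $\omega_\alpha(y)$ of class $C^1$ in $y\in P$, $P$ an open interval. *)

(* Defs.v *)
From Stdlib Require Import Reals List.
From Coquelicot Require Import Coquelicot.
Import ListNotations.
Open Scope R_scope.

Definition sumk (n : nat) (g : nat -> R) : R :=
  fold_right Rplus 0 (map g (seq 0 n)).

Definition inP (pa pb : Rbar) (y : R) : Prop :=
  Rbar_lt pa (Finite y) /\ Rbar_lt (Finite y) pb.

Definition C1_on (pa pb : Rbar) (g : R -> R) : Prop :=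
  forall y, inP pa pb y -> ex_derive g y /\ continuous (Derive g) y.

Definition smooth (f : R -> R) : Prop := forall (n : nat) (x : R), ex_derive_n f n x.

(* A family of d-IEMs with fixed combinatorics on S^1 = R/Z (identified with
   [0,1)): endpoints b 0 y < b 1 y < ... < b d y = b 0 y + 1, the elemental
   intervals being J_alpha(y) = [b alpha y, b (alpha+1) y) (mod 1),
   alpha = 0..d-1, each translated by omega alpha y. *)
Definition IEM_family (d : nat) (pa pb : Rbar) (b om : nat -> R -> R) : Prop :=
  (1 <= d)%nat /\
  Rbar_lt pa pb /\
  (forall y, inP pa pb y ->
     (forall al, (al < d)%nat -> b al y < b (S al) y) /\ b d y = b 0%nat y + 1) /\
  (forall al, (al <= d)%nat -> C1_on pa pb (b al)) /\
  (forall al, (al < d)%nat -> C1_on pa pb (om al)).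

Definition lift (b : nat -> R -> R) (y x : R) : R :=
  b 0%nat y + frac_part (x - b 0%nat y).

(* translation amount applied to x: omega_alpha(y) for the alpha with x in J_alpha(y) *)
Definition shift (d : nat) (b om : nat -> R -> R) (y x : R) : R :=
  sumk d (fun al =>
    if Rle_dec (b al y) (lift b y x) then
      if Rlt_dec (lift b y x) (b (S al) y) then om al y else 0
    else 0).

Definition IEM (d : nat) (b om : nat -> R -> R) (y x : R) : R :=
  frac_part (x + shift d b om y x).

Definition Tmap (d : nat) (b om : nat -> R -> R) (f : R -> R) (eps : R)
    (p : R * R) : R * R :=
  let x' := IEM d b om (snd p) (fst p) in (x', snd p + eps * f x').

Definition cdist (a c : R) : R := Rmin (frac_part (a - c)) (frac_part (c - a)).

(* U (a set of points (x,y) with x in [0,1) representing S^1 x R) is a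
   neighbourhood of p in S^1 x R *)
Definition is_nbhd (U : R * R -> Prop) (p : R * R) : Prop :=
  exists r, 0 < r /\
    forall x y, 0 <= x < 1 -> cdist x (fst p) < r -> Rabs (y - snd p) < r -> U (x, y).

(* Main.v *)
Require Import Defs.
From Stdlib Require Import Reals List Lra Lia ZArith ClassicalEpsilon.
From Coquelicot Require Import Coquelicot.
Open Scope R_scope.

Lemma cont_eps (g : R -> R) (c : R) : continuous g c ->
  forall eps, 0 < eps -> exists del, 0 < del /\ forall z, Rabs (z - c) < del -> Rabs (g z - g c) < eps.
Proof.
  intros Hc eps He.
  destruct (proj1 (filterlim_locally g (g c)) Hc (mkposreal eps He)) as [del Hd].
  exists del; split; [apply cond_pos|].
  intros z Hz. apply (Hd z). exact Hz.
Qed.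

Lemma fold_plus_acc (l : list R) (a : R) : fold_right Rplus a l = fold_right Rplus 0 l + a.
Proof. induction l; simpl; [lra| rewrite IHl; lra]. Qed.

Lemma sumk_0 g : sumk 0 g = 0.
Proof. reflexivity. Qed.

Lemma sumk_S n g : sumk (S n) g = sumk n g + g n.
Proof.
  unfold sumk. rewrite seq_S, map_app, fold_right_app. simpl.
  rewrite fold_plus_acc. lra.
Qed.

Lemma sumk_ext n g h : (forall k, (k < n)%nat -> g k = h k) -> sumk n g = sumk n h.
Proof.
  induction n; intros H; [reflexivity|]. rewrite !sumk_S, IHn, H; [reflexivity|lia|].
  intros; apply H; lia.
Qed.

Lemma sumk_plus n g h : sumk n (fun k => g k + h k) = sumk n g + sumk n h.
Proof. induction n; [simpl; unfold sumk; simpl; lra|]. rewrite !sumk_S, IHn; lra. Qed.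

Lemma sumk_shift n g : g n = g 0%nat -> sumk n (fun k => g (S k)) = sumk n g.
Proof.
  intros H. assert (forall m, sumk m (fun k => g (S k)) + g 0%nat = sumk m g + g m).
  { induction m; [unfold sumk; simpl; lra|]. rewrite !sumk_S. lra. }
  specialize (H0 n). lra.
Qed.

Lemma sumk_single n al v g : (al < n)%nat -> g al = v ->
  (forall k, (k < n)%nat -> k <> al -> g k = 0) -> sumk n g = v.
Proof.
  intros Hal Hv H. induction n; [lia|]. rewrite sumk_S.
  destruct (Nat.eq_dec al n) as [->|Hne].
  - assert (sumk n g = 0).
    { clear IHn Hal. assert (forall m, (m <= n)%nat -> sumk m g = 0).
      { induction m; intros; [reflexivity|]. rewrite sumk_S, IHm, H; lia || lra. }
      apply H0; lia. }
    lra.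
  - rewrite IHn, H; try lia; try lra. intros; apply H; lia.
Qed.

Lemma frac_range r : 0 <= frac_part r < 1.
Proof. destruct (base_fp r); lra. Qed.

Lemma frac_spec r z f : 0 <= f < 1 -> r = IZR z + f -> frac_part r = f.
Proof. intros H1 H2. symmetry. apply (Int_part_frac_part_spec r z f H1 H2). Qed.

Lemma frac_decomp r : r = IZR (Int_part r) + frac_part r.
Proof. apply Rplus_Int_part_frac_part. Qed.

Lemma frac_plus_int r z : frac_part (r + IZR z) = frac_part r.
Proof.
  apply (frac_spec _ (Int_part r + z)); [apply frac_range|].
  rewrite plus_IZR. rewrite (frac_decomp r) at 1. lra.
Qed.

Lemma frac_id x : 0 <= x < 1 -> frac_part x = x.
Proof. intros H. apply (frac_spec _ 0); [auto|simpl; lra]. Qed.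

Lemma frac_frac_plus a w : frac_part (frac_part a + w) = frac_part (a + w).
Proof.
  replace (a + w) with ((frac_part a + w) + IZR (Int_part a)) by (unfold frac_part; lra).
  rewrite frac_plus_int. reflexivity.
Qed.

Lemma frac_eq a b : frac_part a = frac_part b -> exists z, a - b = IZR z.
Proof.
  intros H. exists (Int_part a - Int_part b)%Z. rewrite minus_IZR.
  rewrite (frac_decomp a) at 1. rewrite (frac_decomp b) at 1. lra.
Qed.

Lemma IZR_small z : Rabs (IZR z) < 1 -> z = 0%Z.
Proof.
  intros H. apply Rabs_def2 in H. destruct H.
  assert (-1 < z < 1)%Z by (split; apply lt_IZR; simpl; lra). lia.
Qed.

Lemma frac_le_abs u : 0 <= u -> frac_part u <= u.
Proof.
  intros H. destruct (base_Int_part u) as [H1 H2].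
  assert (-1 < Int_part u)%Z by (apply lt_IZR; simpl; lra).
  assert (0 <= IZR (Int_part u)) by (apply IZR_le; lia).
  unfold frac_part. lra.
Qed.

Lemma cdist_frac a b : cdist (frac_part a) (frac_part b) <= Rabs (a - b).
Proof.
  unfold cdist.
  assert (E1 : frac_part (frac_part a - frac_part b) = frac_part (a - b)).
  { replace (frac_part a - frac_part b) with ((a - b) + IZR (Int_part b - Int_part a)).
    apply frac_plus_int. rewrite minus_IZR. rewrite (frac_decomp a) at 1. rewrite (frac_decomp b) at 1. lra. }
  assert (E2 : frac_part (frac_part b - frac_part a) = frac_part (b - a)).
  { replace (frac_part b - frac_part a) with ((b - a) + IZR (Int_part a - Int_part b)).
    apply frac_plus_int. rewrite minus_IZR. rewrite (frac_decomp a) at 1. rewrite (frac_decomp b) at 1. lra. }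
  rewrite E1, E2. destruct (Rle_or_lt 0 (a - b)).
  - rewrite Rabs_right by lra. eapply Rle_trans; [apply Rmin_l|]. apply frac_le_abs; lra.
  - rewrite Rabs_left by lra. replace (- (a - b)) with (b - a) by ring. eapply Rle_trans; [apply Rmin_r|]. apply frac_le_abs; lra.
Qed.

Lemma cdist_disp x x0 r : 0 <= x < 1 -> 0 <= x0 < 1 -> cdist x x0 < r ->
  exists u, Rabs u < r /\ x = frac_part (x0 + u).
Proof.
  intros Hx Hx0 Hd. unfold cdist in Hd.
  destruct (Rle_or_lt (frac_part (x - x0)) (frac_part (x0 - x))).
  - rewrite Rmin_left in Hd by lra. exists (frac_part (x - x0)). destruct (frac_range (x - x0)).
    split. rewrite Rabs_right; lra.
    replace (x0 + frac_part (x - x0)) with (x + - IZR (Int_part (x - x0))).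
    rewrite <- opp_IZR, frac_plus_int, frac_id; auto.
    unfold frac_part; lra.
  - rewrite Rmin_right in Hd by lra. exists (- frac_part (x0 - x)). destruct (frac_range (x0 - x)).
    split. rewrite Rabs_Ropp, Rabs_right; lra.
    replace (x0 + - frac_part (x0 - x)) with (x + IZR (Int_part (x0 - x))).
    rewrite frac_plus_int, frac_id; auto.
    unfold frac_part; lra.
Qed.

Lemma per_nat (f : R -> R) : (forall x, f (x + 1) = f x) -> forall n x, f (x + INR n) = f x.
Proof.
  intros H n. induction n; intros x. simpl. rewrite Rplus_0_r; auto.
  rewrite S_INR. replace (x + (INR n + 1)) with ((x + INR n) + 1) by lra. rewrite H. auto.
Qed.

Lemma per_int (f : R -> R) : (forall x, f (x + 1) = f x) -> forall z x, f (x + IZR z) = f x.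
Proof.
  intros H z x. destruct (Z.le_gt_cases 0 z).
  - rewrite <- (Z2Nat.id z) by lia. rewrite <- INR_IZR_INZ. apply per_nat; auto.
  - replace z with (- Z.of_nat (Z.to_nat (- z)))%Z by lia.
    rewrite opp_IZR, <- INR_IZR_INZ.
    rewrite <- (per_nat f H (Z.to_nat (-z)) (x + - INR (Z.to_nat (- z)))). f_equal; lra.
Qed.

Lemma per_frac (f : R -> R) : (forall x, f (x + 1) = f x) -> forall x, f (frac_part x) = f x.
Proof.
  intros H x. rewrite (frac_decomp x) at 2. rewrite Rplus_comm. rewrite per_int; auto.
Qed.

Lemma fchoice {A B : Type} (P : A -> B -> Prop) : (forall x, exists y, P x y) -> exists f, forall x, P x (f x).
Proof.
  intros H. exists (fun x => proj1_sig (constructive_indefinite_description _ (H x))).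
  intros x. apply (proj2_sig (constructive_indefinite_description _ (H x))).
Qed.


Lemma inP_nbhd pa pb y0 : inP pa pb y0 -> exists s, 0 < s /\ forall y, Rabs (y - y0) < s -> inP pa pb y.
Proof.
  intros [H1 H2].
  assert (exists s1, 0 < s1 /\ forall y, Rabs (y - y0) < s1 -> Rbar_lt pa y) as [s1 [Hs1 Hs1']].
  { destruct pa as [a| |]; simpl in *.
    - exists (y0 - a); split; [lra|]. intros y Hy. apply Rabs_def2 in Hy. lra.
    - contradiction.
    - exists 1; split; [lra|]. intros; simpl; auto. }
  assert (exists s2, 0 < s2 /\ forall y, Rabs (y - y0) < s2 -> Rbar_lt y pb) as [s2 [Hs2 Hs2']].
  { destruct pb as [a| |]; simpl in *.
    - exists (a - y0); split; [lra|]. intros y Hy. apply Rabs_def2 in Hy. lra.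
    - exists 1; split; [lra|]. intros; simpl; auto.
    - contradiction. }
  exists (Rmin s1 s2). split. apply Rmin_glb_lt; auto.
  intros y Hy. split. apply Hs1'. eapply Rlt_le_trans; [apply Hy|apply Rmin_l].
  apply Hs2'. eapply Rlt_le_trans; [apply Hy|apply Rmin_r].
Qed.

Lemma finite_min (P : nat -> R -> Prop) :
  (forall k r r', 0 < r' <= r -> P k r -> P k r') -> forall n,
  (forall k, (k < n)%nat -> exists r, 0 < r /\ P k r) -> exists r, 0 < r /\ forall k, (k < n)%nat -> P k r.
Proof.
  intros Hmon n. induction n; intros H.
  - exists 1; split; [lra|]; intros; lia.
  - destruct IHn as [r1 [Hr1 H1]]. intros; apply H; lia.
    destruct (H n) as [r2 [Hr2 H2]]; [lia|].
    exists (Rmin r1 r2). split. apply Rmin_glb_lt; auto.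
    intros k Hk. destruct (Nat.eq_dec k n) as [->|].
    + apply (Hmon n r2); auto. split. apply Rmin_glb_lt; auto. apply Rmin_r.
    + apply (Hmon k r1); [|apply H1; lia]. split. apply Rmin_glb_lt; auto. apply Rmin_l.
Qed.

Lemma b_mono d (b : nat -> R -> R) y : (forall al, (al < d)%nat -> b al y < b (S al) y) ->
  forall al al', (al < al' <= d)%nat -> b al y < b al' y.
Proof.
  intros H al al' Hl. induction al' as [|al' IH]; [lia|].
  destruct (Nat.eq_dec al al') as [->|]. apply H; lia.
  eapply Rlt_trans; [apply IH; lia| apply H; lia].
Qed.

Lemma b_mono_le d (b : nat -> R -> R) y : (forall al, (al < d)%nat -> b al y < b (S al) y) ->
  forall al al', (al <= al' <= d)%nat -> b al y <= b al' y.
Proof.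
  intros H al al' Hl. destruct (Nat.eq_dec al al') as [->|]; [lra|].
  left; apply (b_mono d); auto; lia.
Qed.

Lemma shift_val d b om y x al : (forall al, (al < d)%nat -> b al y < b (S al) y) ->
  (al < d)%nat -> b al y <= lift b y x < b (S al) y -> Defs.shift d b om y x = om al y.
Proof.
  intros Hb Hal [H1 H2]. unfold shift.
  apply (sumk_single d al); auto.
  - destruct (Rle_dec _ _); [|lra]. destruct (Rlt_dec _ _); [reflexivity|lra].
  - intros k Hk Hne. destruct (Nat.lt_trichotomy k al) as [Hlt|[Heq|Hgt]].
    + assert (b (S k) y <= b al y) by (apply (b_mono_le d); auto; lia).
      destruct (Rle_dec _ _); auto. destruct (Rlt_dec _ _); auto. lra.
    + lia.
    + assert (b (S al) y <= b k y) by (apply (b_mono_le d); auto; lia).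
      destruct (Rle_dec _ _); auto. lra.
Qed.

Lemma lift_pert (b : nat -> R -> R) y0 y xk u :
  b 0%nat y <= lift b y0 xk + u < b 0%nat y + 1 ->
  lift b y (frac_part (xk + u)) = lift b y0 xk + u.
Proof.
  intros H. unfold lift in *.
  replace (frac_part (xk + u) - b 0%nat y) with (frac_part (xk + u) + - b 0%nat y) by ring.
  rewrite frac_frac_plus.
  rewrite (frac_spec _ (Int_part (xk - b 0%nat y0)) (b 0%nat y0 + frac_part (xk - b 0%nat y0) + u - b 0%nat y)).
  ring. lra. unfold frac_part. ring.
Qed.

Lemma IEM_step d (b om : nat -> R -> R) y y0 xk u al :
  (forall al, (al < d)%nat -> b al y < b (S al) y) -> b d y = b 0%nat y + 1 ->
  (al < d)%nat -> b al y < lift b y0 xk + u < b (S al) y ->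
  IEM d b om y (frac_part (xk + u)) = frac_part (xk + u + om al y).
Proof.
  intros Hb Hd Hal H.
  assert (b 0%nat y <= b al y) by (apply (b_mono_le d); auto; lia).
  assert (b (S al) y <= b d y) by (apply (b_mono_le d); auto; lia).
  unfold IEM. rewrite (shift_val d b om y _ al); auto.
  apply frac_frac_plus. rewrite (lift_pert b y0); lra.
Qed.

Lemma lin_lemma (g : R -> R) c :
  (exists d0, 0 < d0 /\ forall z, Rabs (z - c) < d0 -> ex_derive g z) ->
  continuous (Derive g) c ->
  forall eta, 0 < eta -> exists rho, 0 < rho /\ forall a a', Rabs (a - c) <= rho -> Rabs (a' - c) <= rho ->
    Rabs (g a - g a' - Derive g c * (a - a')) <= eta * Rabs (a - a').
Proof.
  intros [d0 [Hd0 Hder]] Hc eta Heta.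
  destruct (cont_eps _ _ Hc eta Heta) as [d1 [Hd1 Hd1']].
  assert (0 < Rmin d0 d1) by (apply Rmin_glb_lt; auto).
  exists (Rmin d0 d1 / 2). split. lra.
  intros a a' Ha Ha'.
  assert (Hm : Rmin d0 d1 <= d0 /\ Rmin d0 d1 <= d1) by (split; [apply Rmin_l|apply Rmin_r]).
  assert (Hin : forall z, Rmin a' a <= z <= Rmax a' a -> Rabs (z - c) < Rmin d0 d1).
  { intros z [Hz1 Hz2]. apply Rabs_le_between in Ha. apply Rabs_le_between in Ha'.
    assert (Rmin d0 d1 > 0) by (apply Rmin_glb_lt; auto).
    assert (Rmin a' a >= Rmin a' a) by lra.
    unfold Rmin, Rmax in *; destruct (Rle_dec a' a); apply Rabs_def1; lra. }
  set (h := fun z => g z - Derive g c * z).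
  assert (HM : exists z, Rmin a' a <= z <= Rmax a' a /\ h a - h a' = (Derive g z - Derive g c) * (a - a')).
  { apply (MVT_gen h a' a (fun z => Derive g z - Derive g c)).
  - intros z Hz. unfold h. auto_derive.
    apply Hder. eapply Rlt_le_trans; [apply Hin; lra|apply Hm]. rewrite Rmult_1_l, Rmult_1_r. reflexivity.
  - intros z Hz. apply continuity_pt_filterlim. unfold h.
    apply (ex_derive_continuous (fun z => g z - Derive g c * z)).
    auto_derive. apply Hder. eapply Rlt_le_trans; [apply Hin; lra|apply Hm]. }
  destruct HM as [z [Hz Heq]].
  unfold h in Heq.
    replace (g a - g a' - Derive g c * (a - a')) with ((Derive g z - Derive g c) * (a - a')) by lra.
    rewrite Rabs_mult. apply Rmult_le_compat_r. apply Rabs_pos.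
    left. apply Hd1'. eapply Rlt_le_trans; [apply Hin; lra|apply Hm].
Qed.


Lemma abs_bounds x : x <= Rabs x /\ - x <= Rabs x.
Proof. split. apply Rle_abs. rewrite <- Rabs_Ropp. apply Rle_abs. Qed.

Lemma lip_cont (G : R -> R) Lc : 0 <= Lc -> (forall x x', Rabs (G x - G x') <= Lc * Rabs (x - x')) -> continuity G.
Proof.
  intros HL H x0. unfold continuity_pt, continue_in, limit1_in, limit_in.
  intros eps Heps. exists (eps / (Lc + 1)). split. apply Rdiv_lt_0_compat; lra.
  intros x [_ Hx]. simpl in *. unfold R_dist in *.
  eapply Rle_lt_trans; [apply H|].
  apply Rle_lt_trans with ((Lc + 1) * Rabs (x - x0)). assert (0 <= Rabs (x - x0)) by apply Rabs_pos. nra.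
  apply Rmult_lt_reg_r with (/ (Lc + 1)). apply Rinv_0_lt_compat; lra.
  replace ((Lc + 1) * Rabs (x - x0) * / (Lc + 1)) with (Rabs (x - x0)) by (field; lra).
  exact Hx.
Qed.

Definition clamp lo hi z := Rmax lo (Rmin hi z).

Lemma clamp_lip lo hi x x' : lo <= hi -> Rabs (clamp lo hi x - clamp lo hi x') <= Rabs (x - x').
Proof.
  intros Hl. unfold clamp, Rmax, Rmin. destruct (abs_bounds (x - x')).
  repeat destruct Rle_dec; apply Rabs_le; lra.
Qed.

Lemma clamp_in lo hi z : lo <= hi -> lo <= clamp lo hi z <= hi.
Proof. intros. unfold clamp, Rmax, Rmin. repeat destruct Rle_dec; lra. Qed.

Lemma clamp_id lo hi z : lo <= z <= hi -> clamp lo hi z = z.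
Proof. intros. unfold clamp, Rmax, Rmin. repeat destruct Rle_dec; lra. Qed.

Lemma ivt_lip (g : R -> R) lo hi Lc : lo < hi -> 0 <= Lc ->
  (forall z z', lo <= z <= hi -> lo <= z' <= hi -> Rabs (g z - g z') <= Lc * Rabs (z - z')) ->
  g lo * g hi < 0 -> exists z, lo < z < hi /\ g z = 0.
Proof.
  intros Hlh HL Hg Hs.
  set (G := fun z => g (clamp lo hi z)).
  assert (HG : forall x x', Rabs (G x - G x') <= Lc * Rabs (x - x')).
  { intros x x'. unfold G. eapply Rle_trans. apply Hg; apply clamp_in; lra.
    apply Rmult_le_compat_l; auto. apply clamp_lip; lra. }
  assert (Glo : G lo = g lo) by (unfold G; rewrite clamp_id; auto; lra).
  assert (Ghi : G hi = g hi) by (unfold G; rewrite clamp_id; auto; lra).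
  assert (Hfin : forall z, lo <= z <= hi -> G z = 0 -> exists z, lo < z < hi /\ g z = 0).
  { intros z Hz HGz. exists z. unfold G in HGz. rewrite clamp_id in HGz by lra.
    split; auto. assert (z <> lo) by (intro; subst; rewrite HGz in Hs; lra).
    assert (z <> hi) by (intro; subst; rewrite HGz in Hs; lra).
    destruct Hz as [[Hz1|Hz1] [Hz2|Hz2]]; subst; try (split; lra); congruence. }
  destruct (Rlt_or_le (g lo) 0).
  - assert (0 < g hi) by nra.
    destruct (IVT G lo hi) as [z [Hz HGz]]; auto. apply (lip_cont G Lc); auto. lra. lra.
    apply (Hfin z); auto.
  - assert (g hi < 0) by nra. assert (g lo <> 0) by (intro Hz; rewrite Hz in Hs; lra).
    destruct (IVT (fun z => - G z) lo hi) as [z [Hz HGz]]; auto.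
    apply (lip_cont _ Lc); auto. intros x x'. replace (- G x - - G x') with (- (G x - G x')) by ring.
    rewrite Rabs_Ropp. auto. lra. lra.
    apply (Hfin z); auto. lra.
Qed.

Section IFT.
Variables (D A : R -> R -> R -> R) (y0 a c r s e lam lame mu mue : R).
Hypotheses (Ha : a <> 0) (Hc : c <> 0) (Hr : 0 < r) (Hs : 0 < s) (He : 0 < e)
  (Hlam : 0 <= lam) (Hlame : 0 <= lame) (Hmu : 0 <= mu) (Hmue : 0 <= mue).
Hypothesis HD1 : forall u y y' ep, Rabs u <= r -> Rabs (y - y0) <= s -> Rabs (y' - y0) <= s -> Rabs ep <= e ->
  Rabs (D u y ep - D u y' ep - a * (y - y')) <= Rabs a / 2 * Rabs (y - y').
Hypothesis HD2 : forall u u' y ep ep', Rabs u <= r -> Rabs u' <= r -> Rabs (y - y0) <= s -> Rabs ep <= e -> Rabs ep' <= e ->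
  Rabs (D u y ep - D u' y ep') <= lam * Rabs (u - u') + lame * Rabs (ep - ep').
Hypothesis HA1 : forall u u' y ep, Rabs u <= r -> Rabs u' <= r -> Rabs (y - y0) <= s -> Rabs ep <= e ->
  Rabs (A u y ep - A u' y ep - c * (u - u')) <= Rabs c / 4 * Rabs (u - u').
Hypothesis HA2 : forall u y y' ep ep', Rabs u <= r -> Rabs (y - y0) <= s -> Rabs (y' - y0) <= s -> Rabs ep <= e -> Rabs ep' <= e ->
  Rabs (A u y ep - A u y' ep') <= mu * Rabs (y - y') + mue * Rabs (ep - ep').
Hypothesis HD0 : forall u, Rabs u <= r -> D u y0 0 = 0.
Hypothesis HA0 : A 0 y0 0 = 0.
Hypothesis HS : 8 * (mu * lam) <= Rabs a * Rabs c.
Hypothesis He1 : 2 * (lame * e) < Rabs a * s.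
Hypothesis He2 : 4 * (mu * s + mue * e) < Rabs c * r.

Lemma y_bound u y ep u' y' ep' :
  Rabs u <= r -> Rabs (y - y0) <= s -> Rabs ep <= e -> Rabs u' <= r -> Rabs (y' - y0) <= s -> Rabs ep' <= e ->
  D u y ep = 0 -> D u' y' ep' = 0 ->
  Rabs a / 2 * Rabs (y - y') <= lam * Rabs (u - u') + lame * Rabs (ep - ep').
Proof.
  intros. pose proof (HD1 u y y' ep H H0 H3 H1) as H7.
  pose proof (HD2 u u' y' ep ep' H H2 H3 H1 H4) as H8.
  rewrite H5 in H7. rewrite H6 in H8.
  rewrite Rminus_0_r in H8.
  pose proof (Rabs_triang_inv (a * (y - y')) (- D u y' ep)).
  replace (a * (y - y') - - D u y' ep) with (- (0 - D u y' ep - a * (y - y'))) in H9 by ring.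
  rewrite Rabs_Ropp in H9. rewrite Rabs_Ropp in H9. rewrite Rabs_mult in H9. lra.
Qed.

Lemma u_bound u y ep u' y' ep' :
  Rabs u <= r -> Rabs (y - y0) <= s -> Rabs ep <= e -> Rabs u' <= r -> Rabs (y' - y0) <= s -> Rabs ep' <= e ->
  A u y ep = 0 -> A u' y' ep' = 0 ->
  3 * Rabs c / 4 * Rabs (u - u') <= mu * Rabs (y - y') + mue * Rabs (ep - ep').
Proof.
  intros. pose proof (HA1 u u' y ep H H2 H0 H1) as H7.
  pose proof (HA2 u' y y' ep ep' H2 H0 H3 H1 H4) as H8.
  rewrite H5 in H7. rewrite H6 in H8. rewrite Rminus_0_r in H8.
  pose proof (Rabs_triang_inv (c * (u - u')) (- A u' y ep)).
  replace (c * (u - u') - - A u' y ep) with (- (0 - A u' y ep - c * (u - u'))) in H9 by ring.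
  rewrite Rabs_Ropp in H9. rewrite Rabs_Ropp in H9. rewrite Rabs_mult in H9. lra.
Qed.

Definition K1 := 2 * (2 * mu * lame + Rabs a * mue) / (Rabs a * Rabs c).

Lemma sol_lip u y ep u' y' ep' :
  Rabs u <= r -> Rabs (y - y0) <= s -> Rabs ep <= e -> Rabs u' <= r -> Rabs (y' - y0) <= s -> Rabs ep' <= e ->
  D u y ep = 0 -> A u y ep = 0 -> D u' y' ep' = 0 -> A u' y' ep' = 0 ->
  Rabs (u - u') <= K1 * Rabs (ep - ep') /\
  Rabs a / 2 * Rabs (y - y') <= lam * Rabs (u - u') + lame * Rabs (ep - ep').
Proof.
  intros.
  pose proof (y_bound u y ep u' y' ep' H H0 H1 H2 H3 H4 H5 H7) as Hy.
  pose proof (u_bound u y ep u' y' ep' H H0 H1 H2 H3 H4 H6 H8) as Hu.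
  split; auto.
  assert (Hpa : 0 < Rabs a) by (apply Rabs_pos_lt; auto).
  assert (Hpc : 0 < Rabs c) by (apply Rabs_pos_lt; auto).
  set (du := Rabs (u - u')) in *. set (dy := Rabs (y - y')) in *. set (de := Rabs (ep - ep')) in *.
  assert (0 <= du) by apply Rabs_pos. assert (0 <= dy) by apply Rabs_pos. assert (0 <= de) by apply Rabs_pos.
  assert (Hk : Rabs a * Rabs c / 2 * du <= (2 * mu * lame + Rabs a * mue) * de).
  { assert (Rabs a * (3 * Rabs c / 4 * du) <= Rabs a * (mu * dy + mue * de)) by (apply Rmult_le_compat_l; lra).
    assert (2 * mu * (Rabs a / 2 * dy) <= 2 * mu * (lam * du + lame * de)) by (apply Rmult_le_compat_l; lra).
    assert (2 * mu * lam * du <= Rabs a * Rabs c / 4 * du) by (apply Rmult_le_compat_r; lra).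
    nra. }
  unfold K1. apply Rmult_le_reg_l with (Rabs a * Rabs c / 2). nra.
  replace (Rabs a * Rabs c / 2 * (2 * (2 * mu * lame + Rabs a * mue) / (Rabs a * Rabs c) * de))
    with ((2 * mu * lame + Rabs a * mue) * de) by (field; lra).
  exact Hk.
Qed.

Lemma exists_Y ep u : Rabs ep <= e -> Rabs u <= r -> exists y, Rabs (y - y0) < s /\ D u y ep = 0.
Proof.
  intros Hep Hu.
  assert (Hpa : 0 < Rabs a) by (apply Rabs_pos_lt; auto).
  assert (Hd0 : Rabs (D u y0 ep) <= lame * e).
  { assert (Hy0 : Rabs (y0 - y0) <= s) by (rewrite Rminus_diag, Rabs_R0; lra).
    assert (H0e : Rabs 0 <= e) by (rewrite Rabs_R0; lra).
    pose proof (HD2 u u y0 ep 0 Hu Hu Hy0 Hep H0e) as H. rewrite HD0 in H by auto.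
    rewrite Rminus_diag, Rabs_R0, Rminus_0_r, Rminus_0_r in H.
    eapply Rle_trans. apply H.
    assert (lame * Rabs ep <= lame * e) by (apply Rmult_le_compat_l; lra). lra. }
  assert (Hp : Rabs (D u (y0 + s) ep - a * s) < Rabs a * s).
  { pose proof (HD1 u (y0 + s) y0 ep Hu). replace (y0 + s - y0) with s in H by ring.
    rewrite Rminus_diag, Rabs_R0 in H. rewrite Rabs_right in H by lra.
    specialize (H (Rle_refl _) ltac:(lra) Hep).
    pose proof (Rabs_triang (D u (y0 + s) ep - D u y0 ep - a * s) (D u y0 ep)).
    replace (D u (y0 + s) ep - D u y0 ep - a * s + D u y0 ep) with (D u (y0 + s) ep - a * s) in H0 by ring.
    lra. }
  assert (Hm : Rabs (D u (y0 - s) ep + a * s) < Rabs a * s).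
  { pose proof (HD1 u (y0 - s) y0 ep Hu). replace (y0 - s - y0) with (- s) in H by ring.
    rewrite Rminus_diag, Rabs_R0 in H. rewrite Rabs_Ropp, Rabs_right in H by lra.
    specialize (H (Rle_refl _) ltac:(lra) Hep).
    pose proof (Rabs_triang (D u (y0 - s) ep - D u y0 ep - a * - s) (D u y0 ep)).
    replace (D u (y0 - s) ep - D u y0 ep - a * - s + D u y0 ep) with (D u (y0 - s) ep + a * s) in H0 by ring.
    lra. }
  destruct (ivt_lip (fun y => D u y ep) (y0 - s) (y0 + s) (3 * Rabs a / 2)) as [z [Hz1 Hz2]].
  - lra.
  - lra.
  - intros z z' Hz Hz'. pose proof (HD1 u z z' ep Hu). 
    assert (Rabs (z - y0) <= s) by (apply Rabs_le; lra). assert (Rabs (z' - y0) <= s) by (apply Rabs_le; lra).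
    specialize (H H0 H1 Hep).
    pose proof (Rabs_triang (D u z ep - D u z' ep - a * (z - z')) (a * (z - z'))).
    replace (D u z ep - D u z' ep - a * (z - z') + a * (z - z')) with (D u z ep - D u z' ep) in H2 by ring.
    rewrite Rabs_mult in H2. lra.
  - apply Rabs_def2 in Hp. apply Rabs_def2 in Hm. simpl.
    destruct (Rle_or_lt 0 a).
    + rewrite Rabs_right in Hp, Hm by lra. assert (0 < a) by (destruct H; auto; congruence). nra.
    + rewrite Rabs_left in Hp, Hm by lra. nra.
  - exists z. split; auto. apply Rabs_def1; lra.
Qed.

Lemma exists_sol ep : Rabs ep <= e -> exists u y, Rabs u < r /\ Rabs (y - y0) < s /\ D u y ep = 0 /\ A u y ep = 0.
Proof.
  intros Hep.
  assert (Hpa : 0 < Rabs a) by (apply Rabs_pos_lt; auto).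
  assert (Hpc : 0 < Rabs c) by (apply Rabs_pos_lt; auto).
  destruct (fchoice (fun u y => Rabs u <= r -> Rabs (y - y0) < s /\ D u y ep = 0)) as [Y HY].
  { intros u. destruct (Rle_or_lt (Rabs u) r).
    - destruct (exists_Y ep u Hep H) as [y Hy]. exists y; auto.
    - exists y0; intros; lra. }
  assert (HYl : forall u u', Rabs u <= r -> Rabs u' <= r -> Rabs a / 2 * Rabs (Y u - Y u') <= lam * Rabs (u - u')).
  { intros u u' Hu Hu'. destruct (HY u Hu). destruct (HY u' Hu').
    pose proof (y_bound u (Y u) ep u' (Y u') ep Hu ltac:(lra) Hep Hu' ltac:(lra) Hep H0 H2).
    rewrite Rminus_diag, Rabs_R0 in H3. lra. }
  assert (HA0' : forall y ep', Rabs (y - y0) <= s -> Rabs ep' <= e -> Rabs (A 0 y ep') < Rabs c * r / 4).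
  { intros y ep' Hy Hep'.
    assert (Hy0 : Rabs (y0 - y0) <= s) by (rewrite Rminus_diag, Rabs_R0; lra).
    assert (H0e : Rabs 0 <= e) by (rewrite Rabs_R0; lra).
    assert (H0r : Rabs 0 <= r) by (rewrite Rabs_R0; lra).
    pose proof (HA2 0 y y0 ep' 0 H0r Hy Hy0 Hep' H0e) as H. rewrite HA0, !Rminus_0_r in H.
    assert (mu * Rabs (y - y0) <= mu * s) by (apply Rmult_le_compat_l; lra).
    assert (mue * Rabs ep' <= mue * e) by (apply Rmult_le_compat_l; lra). lra. }
  set (h := fun u => A u (Y u) ep).
  assert (Hr' : Rabs r <= r) by (rewrite Rabs_right; lra).
  assert (Hmr' : Rabs (- r) <= r) by (rewrite Rabs_Ropp, Rabs_right; lra).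
  assert (Hhp : Rabs (h r - c * r) < Rabs c * r / 2).
  { unfold h. destruct (HY r Hr').
    pose proof (HA1 r 0 (Y r) ep Hr' ltac:(rewrite Rabs_R0; lra) ltac:(lra) Hep).
    rewrite !Rminus_0_r, (Rabs_right r) in H1 by lra.
    pose proof (HA0' (Y r) ep ltac:(lra) Hep).
    pose proof (Rabs_triang (A r (Y r) ep - A 0 (Y r) ep - c * r) (A 0 (Y r) ep)).
    replace (A r (Y r) ep - A 0 (Y r) ep - c * r + A 0 (Y r) ep) with (A r (Y r) ep - c * r) in H3 by ring.
    lra. }
  assert (Hhm : Rabs (h (- r) + c * r) < Rabs c * r / 2).
  { unfold h. destruct (HY (-r) Hmr').
    pose proof (HA1 (-r) 0 (Y (-r)) ep Hmr' ltac:(rewrite Rabs_R0; lra) ltac:(lra) Hep).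
    rewrite !Rminus_0_r, (Rabs_Ropp r), (Rabs_right r) in H1 by lra.
    pose proof (HA0' (Y (-r)) ep ltac:(lra) Hep).
    pose proof (Rabs_triang (A (-r) (Y (-r)) ep - A 0 (Y (-r)) ep - c * - r) (A 0 (Y (-r)) ep)).
    replace (A (-r) (Y (-r)) ep - A 0 (Y (-r)) ep - c * - r + A 0 (Y (-r)) ep) with (A (-r) (Y (-r)) ep + c * r) in H3 by ring.
    lra. }
  destruct (ivt_lip h (- r) r (5 * Rabs c / 4 + 2 * mu * lam / Rabs a)) as [z [Hz1 Hz2]].
  - lra.
  - assert (0 <= 2 * mu * lam / Rabs a) by (apply Rmult_le_pos; [nra| left; apply Rinv_0_lt_compat; auto]). lra.
  - intros z z' Hz Hz'. unfold h.
    assert (Hzr : Rabs z <= r) by (apply Rabs_le; lra). assert (Hzr' : Rabs z' <= r) by (apply Rabs_le; lra).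
    destruct (HY z Hzr). destruct (HY z' Hzr').
    pose proof (HA1 z z' (Y z) ep Hzr Hzr' ltac:(lra) Hep).
    pose proof (HA2 z' (Y z) (Y z') ep ep Hzr' ltac:(lra) ltac:(lra) Hep Hep).
    rewrite Rminus_diag, Rabs_R0 in H4.
    pose proof (HYl z z' Hzr Hzr').
    assert (Hyl : Rabs (Y z - Y z') <= 2 * lam / Rabs a * Rabs (z - z')).
    { apply Rmult_le_reg_l with (Rabs a / 2). lra.
      replace (Rabs a / 2 * (2 * lam / Rabs a * Rabs (z - z'))) with (lam * Rabs (z - z')) by (field; lra). auto. }
    pose proof (Rabs_triang (A z (Y z) ep - A z' (Y z) ep - c * (z - z')) (c * (z - z'))).
    replace (A z (Y z) ep - A z' (Y z) ep - c * (z - z') + c * (z - z')) with (A z (Y z) ep - A z' (Y z) ep) in H6 by ring.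
    rewrite Rabs_mult in H6.
    pose proof (Rabs_triang (A z (Y z) ep - A z' (Y z) ep) (A z' (Y z) ep - A z' (Y z') ep)).
    replace (A z (Y z) ep - A z' (Y z) ep + (A z' (Y z) ep - A z' (Y z') ep)) with (A z (Y z) ep - A z' (Y z') ep) in H7 by ring.
    assert (mu * Rabs (Y z - Y z') <= mu * (2 * lam / Rabs a * Rabs (z - z'))) by (apply Rmult_le_compat_l; auto).
    replace (mu * (2 * lam / Rabs a * Rabs (z - z'))) with (2 * mu * lam / Rabs a * Rabs (z - z')) in H8 by (field; lra).
    lra.
  - apply Rabs_def2 in Hhp. apply Rabs_def2 in Hhm.
    destruct (Rle_or_lt 0 c).
    + rewrite Rabs_right in Hhp, Hhm by lra. assert (0 < c) by (destruct H; auto; congruence). nra.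
    + rewrite Rabs_left in Hhp, Hhm by lra. nra.
  - exists z, (Y z). assert (Hzr : Rabs z <= r) by (apply Rabs_le; lra). destruct (HY z Hzr).
    split. apply Rabs_def1; lra. split; auto.
Qed.

End IFT.


Fixpoint orb (w : nat -> R -> R) (P : nat -> R) (F : R -> R) (y0 ep u y : R) (k : nat) : R * R :=
  match k with
  | O => (u, 0)
  | S k => let p := orb w P F y0 ep u y k in
           let u' := fst p + (w k (y + ep * snd p) - w k y0) in
           (u', snd p + F (P k + u'))
  end.

Lemma tel (X t : nat -> R) beta n : (forall k, (k < n)%nat -> Rabs (X (S k) - X k - t k) <= beta) ->
  Rabs (X n - X 0%nat - sumk n t) <= INR n * beta.
Proof.
  induction n; intros H. simpl. rewrite sumk_0. replace (X 0%nat - X 0%nat - 0) with 0 by ring. rewrite Rabs_R0; lra.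
  rewrite sumk_S, S_INR.
  replace (X (S n) - X 0%nat - (sumk n t + t n)) with ((X n - X 0%nat - sumk n t) + (X (S n) - X n - t n)) by ring.
  eapply Rle_trans; [apply Rabs_triang|]. specialize (IHn ltac:(intros; apply H; lia)).
  specialize (H n ltac:(lia)). lra.
Qed.

Lemma tel0 (X : nat -> R) beta n : (forall k, (k < n)%nat -> Rabs (X (S k) - X k) <= beta) ->
  Rabs (X n - X 0%nat) <= INR n * beta.
Proof.
  intros H. pose proof (tel X (fun _ => 0) beta n) as T.
  assert (sumk n (fun _ => 0) = 0). { clear T H. induction n; auto. rewrite sumk_S, IHn; ring. }
  rewrite H0, Rminus_0_r in T. apply T. intros. rewrite Rminus_0_r. auto.
Qed.

Lemma abs_prod_le x y X Y : Rabs x <= X -> Rabs y <= Y -> Rabs (x * y) <= X * Y.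
Proof. intros. rewrite Rabs_mult. apply Rmult_le_compat; auto; apply Rabs_pos. Qed.

Section Orbit.
Variables (w : nat -> R -> R) (P : nat -> R) (F : R -> R) (q : nat) (y0 rho sig eta K : R) (a g : nat -> R).
Hypothesis HW : forall k z z', (k < q)%nat -> Rabs (z - y0) <= sig -> Rabs (z' - y0) <= sig ->
  Rabs (w k z - w k z' - a k * (z - z')) <= eta * Rabs (z - z').
Hypothesis HF : forall k v v', (k < q)%nat -> Rabs v <= rho -> Rabs v' <= rho ->
  Rabs (F (P k + v) - F (P k + v') - g k * (v - v')) <= eta * Rabs (v - v').
Hypothesis HK : forall k, (k < q)%nat -> Rabs (a k) <= K /\ Rabs (g k) <= K /\ Rabs (F (P k)) <= K.
Hypotheses (Heta : 0 <= eta <= 1) (Hrho : 0 < rho <= 1) (Hsig : 0 < sig) (HK0 : 0 <= K).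

Definition LL := K + 1.
Definition BB := 2 * LL.
Definition Qr := INR q.

Lemma w_lip k z z' : (k < q)%nat -> Rabs (z - y0) <= sig -> Rabs (z' - y0) <= sig ->
  Rabs (w k z - w k z') <= LL * Rabs (z - z').
Proof.
  intros. pose proof (HW k z z' H H0 H1). destruct (HK k H) as [Ha _].
  pose proof (abs_prod_le (a k) (z - z') K (Rabs (z - z')) Ha (Rle_refl _)).
  pose proof (Rabs_triang (w k z - w k z' - a k * (z - z')) (a k * (z - z'))).
  replace (w k z - w k z' - a k * (z - z') + a k * (z - z')) with (w k z - w k z') in H4 by ring.
  unfold LL. assert (eta * Rabs (z - z') <= 1 * Rabs (z - z')) by (apply Rmult_le_compat_r; [apply Rabs_pos|lra]). lra.
Qed.

Lemma F_lip k v v' : (k < q)%nat -> Rabs v <= rho -> Rabs v' <= rho ->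
  Rabs (F (P k + v) - F (P k + v')) <= LL * Rabs (v - v').
Proof.
  intros. pose proof (HF k v v' H H0 H1). destruct (HK k H) as [_ [Hg _]].
  pose proof (abs_prod_le (g k) (v - v') K (Rabs (v - v')) Hg (Rle_refl _)).
  pose proof (Rabs_triang (F (P k + v) - F (P k + v') - g k * (v - v')) (g k * (v - v'))).
  replace (F (P k + v) - F (P k + v') - g k * (v - v') + g k * (v - v')) with (F (P k + v) - F (P k + v')) in H4 by ring.
  unfold LL. assert (eta * Rabs (v - v') <= 1 * Rabs (v - v')) by (apply Rmult_le_compat_r; [apply Rabs_pos|lra]). lra.
Qed.

Lemma F_bound k v : (k < q)%nat -> Rabs v <= rho -> Rabs (F (P k + v)) <= BB.
Proof.
  intros. pose proof (F_lip k v 0 H H0 ltac:(rewrite Rabs_R0; lra)). rewrite Rplus_0_r, Rminus_0_r in H1.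
  destruct (HK k H) as [_ [_ Hf]].
  pose proof (Rabs_triang (F (P k + v) - F (P k)) (F (P k))).
  replace (F (P k + v) - F (P k) + F (P k)) with (F (P k + v)) in H2 by ring.
  assert (LL * Rabs v <= LL * 1) by (apply Rmult_le_compat_l; unfold LL; lra).
  unfold BB, LL in *. lra.
Qed.

Variables (r s e : R).
Hypotheses (Hr : 0 < r) (Hs : 0 < s) (He : 0 < e) (Hr2 : r <= rho / 2) (Hs2 : s <= sig / 2)
  (Hqs : Qr * LL * sig <= rho / 2) (Hqe : e * Qr * BB <= sig / 2) (He1 : e <= 1).

Definition inbox u y ep := Rabs u <= r /\ Rabs (y - y0) <= s /\ Rabs ep <= e.

Notation UU ep u y k := (fst (orb w P F y0 ep u y k)).
Notation SS ep u y k := (snd (orb w P F y0 ep u y k)).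

Lemma LL_pos : 0 < LL.  Proof. unfold LL; lra. Qed.
Lemma BB_pos : 0 < BB.  Proof. unfold BB, LL; lra. Qed.
Lemma QB_nonneg x : 0 <= Qr * BB * Rabs x.
Proof. apply Rmult_le_pos; [apply Rmult_le_pos|apply Rabs_pos]; [apply pos_INR| left; apply BB_pos]. Qed.

Lemma inv u y ep : inbox u y ep -> forall k, (k <= q)%nat ->
  Rabs (UU ep u y k) <= r + INR k * LL * sig /\ Rabs (SS ep u y k) <= INR k * BB.
Proof.
  intros [Hu [Hy Hep]] k. induction k; intros Hk.
  - simpl. rewrite Rabs_R0. lra.
  - destruct IHk as [IH1 IH2]; [lia|]. simpl orb. cbv zeta. simpl fst; simpl snd.
    rewrite S_INR.
    assert (HkR : INR k <= Qr) by (apply le_INR; lia).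
    assert (Hyk : Rabs (y + ep * SS ep u y k - y0) <= sig).
    { assert (Rabs (ep * SS ep u y k) <= e * (INR k * BB)) by (apply abs_prod_le; auto).
      assert (e * (INR k * BB) <= e * Qr * BB).
      { rewrite <- Rmult_assoc. apply Rmult_le_compat_r. left; apply BB_pos. apply Rmult_le_compat_l; lra. }
      replace (y + ep * SS ep u y k - y0) with ((y - y0) + ep * SS ep u y k) by ring.
      eapply Rle_trans; [apply Rabs_triang|]. lra. }
    pose proof (w_lip k _ y0 ltac:(lia) Hyk ltac:(rewrite Rminus_diag, Rabs_R0; lra)).
    replace (y + ep * SS ep u y k - y0) with (y + ep * SS ep u y k - y0) in H by ring.
    assert (LL * Rabs (y + ep * SS ep u y k - y0) <= LL * sig) by (apply Rmult_le_compat_l; [left; apply LL_pos|auto]).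
    assert (Hun : Rabs (UU ep u y k + (w k (y + ep * SS ep u y k) - w k y0)) <= r + (INR k + 1) * LL * sig).
    { eapply Rle_trans; [apply Rabs_triang|]. lra. }
    split; auto.
    assert (Hrho' : Rabs (UU ep u y k + (w k (y + ep * SS ep u y k) - w k y0)) <= rho).
    { assert ((INR k + 1) * LL * sig <= Qr * LL * sig).
      { apply Rmult_le_compat_r; [lra|]. apply Rmult_le_compat_r. left; apply LL_pos.
        unfold Qr. rewrite <- S_INR. apply le_INR. lia. }
      lra. }
    pose proof (F_bound k _ ltac:(lia) Hrho').
    eapply Rle_trans; [apply Rabs_triang|]. lra.
Qed.

Lemma inv_rho u y ep : inbox u y ep -> forall k, (k <= q)%nat ->
  Rabs (UU ep u y k) <= rho /\ Rabs (SS ep u y k) <= Qr * BB /\ Rabs (y + ep * SS ep u y k - y0) <= sig.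
Proof.
  intros Hb k Hk. destruct (inv u y ep Hb k Hk) as [H1 H2]. destruct Hb as [Hu [Hy Hep]].
  assert (HkR : INR k <= Qr) by (apply le_INR; lia).
  assert (INR k * LL * sig <= Qr * LL * sig).
  { apply Rmult_le_compat_r; [lra|]. apply Rmult_le_compat_r; [left; apply LL_pos|auto]. }
  assert (INR k * BB <= Qr * BB) by (apply Rmult_le_compat_r; [left; apply BB_pos|auto]).
  split; [lra|]. split; [lra|].
  assert (Rabs (ep * SS ep u y k) <= e * (Qr * BB)) by (apply abs_prod_le; lra).
  replace (y + ep * SS ep u y k - y0) with ((y - y0) + ep * SS ep u y k) by ring.
  eapply Rle_trans; [apply Rabs_triang|]. lra.
Qed.


Lemma U_S ep u y k : UU ep u y (S k) = UU ep u y k + (w k (y + ep * SS ep u y k) - w k y0).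
Proof. reflexivity. Qed.
Lemma S_S ep u y k : SS ep u y (S k) = SS ep u y k + F (P k + UU ep u y (S k)).
Proof. reflexivity. Qed.

Lemma U_0 ep u y : UU ep u y 0 = u.
Proof. reflexivity. Qed.
Lemma S_0 ep u y : SS ep u y 0 = 0.
Proof. reflexivity. Qed.

Definition GG := (1 + LL) ^ 2 + 1.
Definition CC := GG ^ q.

Lemma GG_ge1 : 1 <= GG.
Proof. unfold GG. assert (0 <= (1 + LL) ^ 2) by (apply pow_le; pose proof LL_pos; lra). lra. Qed.

Lemma dyk u y ep u' y' ep' k : inbox u y ep -> inbox u' y' ep' -> (k <= q)%nat ->
  Rabs ((y + ep * SS ep u y k) - (y' + ep' * SS ep' u' y' k)) <=
  Rabs (y - y') + e * Rabs (SS ep u y k - SS ep' u' y' k) + Qr * BB * Rabs (ep - ep').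
Proof.
  intros Hb Hb' Hk. destruct (inv_rho u' y' ep' Hb' k Hk) as [_ [H2 _]].
  destruct Hb as [_ [_ Hep]].
  replace ((y + ep * SS ep u y k) - (y' + ep' * SS ep' u' y' k)) with
    ((y - y') + ep * (SS ep u y k - SS ep' u' y' k) + (ep - ep') * SS ep' u' y' k) by ring.
  eapply Rle_trans; [apply Rabs_triang|]. eapply Rle_trans; [apply Rplus_le_compat_r; apply Rabs_triang|].
  assert (Rabs (ep * (SS ep u y k - SS ep' u' y' k)) <= e * Rabs (SS ep u y k - SS ep' u' y' k)) by (apply abs_prod_le; lra).
  assert (Rabs ((ep - ep') * SS ep' u' y' k) <= Rabs (ep - ep') * (Qr * BB)) by (apply abs_prod_le; lra).
  lra.
Qed.

Lemma prop u y ep u' y' ep' : inbox u y ep -> inbox u' y' ep' -> forall k, (k <= q)%nat ->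
  Rabs (UU ep u y k - UU ep' u' y' k) + Rabs (SS ep u y k - SS ep' u' y' k) + (Rabs (y - y') + Qr * BB * Rabs (ep - ep'))
  <= GG ^ k * (Rabs (u - u') + (Rabs (y - y') + Qr * BB * Rabs (ep - ep'))).
Proof.
  intros Hb Hb' k. induction k; intros Hk.
  - simpl. replace (0 - 0) with 0 by ring. rewrite Rabs_R0. lra.
  - specialize (IHk ltac:(lia)).
    set (W := Rabs (y - y') + Qr * BB * Rabs (ep - ep')) in *.
    set (m := Rabs (UU ep u y k - UU ep' u' y' k) + Rabs (SS ep u y k - SS ep' u' y' k) + W).
    pose proof (dyk u y ep u' y' ep' k Hb Hb' ltac:(lia)) as Hdy.
    destruct (inv_rho u y ep Hb k ltac:(lia)) as [_ [_ Hy1]].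
    destruct (inv_rho u' y' ep' Hb' k ltac:(lia)) as [_ [_ Hy2]].
    destruct (inv_rho u y ep Hb (S k) Hk) as [Hu1 _].
    destruct (inv_rho u' y' ep' Hb' (S k) Hk) as [Hu2 _].
    pose proof (w_lip k _ _ ltac:(lia) Hy1 Hy2) as Hw.
    assert (HX : Rabs (UU ep u y (S k) - UU ep' u' y' (S k)) <= (1 + LL) * m).
    { rewrite !U_S.
      replace (UU ep u y k + (w k (y + ep * SS ep u y k) - w k y0) - (UU ep' u' y' k + (w k (y' + ep' * SS ep' u' y' k) - w k y0)))
        with ((UU ep u y k - UU ep' u' y' k) + (w k (y + ep * SS ep u y k) - w k (y' + ep' * SS ep' u' y' k))) by ring.
      eapply Rle_trans; [apply Rabs_triang|].
      assert (e * Rabs (SS ep u y k - SS ep' u' y' k) <= Rabs (SS ep u y k - SS ep' u' y' k)).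
      { rewrite <- (Rmult_1_l (Rabs (SS ep u y k - SS ep' u' y' k))) at 2. apply Rmult_le_compat_r; [apply Rabs_pos|lra]. }
      assert (LL * Rabs (y + ep * SS ep u y k - (y' + ep' * SS ep' u' y' k)) <= LL * m).
      { apply Rmult_le_compat_l; [left; apply LL_pos|]. unfold m, W. pose proof (Rabs_pos (UU ep u y k - UU ep' u' y' k)). lra. }
      assert (Rabs (UU ep u y k - UU ep' u' y' k) <= m).
      { unfold m. pose proof (Rabs_pos (SS ep u y k - SS ep' u' y' k)).
        assert (0 <= W) by (unfold W; pose proof (Rabs_pos (y - y')); pose proof (QB_nonneg (ep - ep')); lra). lra. }
      lra. }
    assert (HS : Rabs (SS ep u y (S k) - SS ep' u' y' (S k)) <= Rabs (SS ep u y k - SS ep' u' y' k) + LL * Rabs (UU ep u y (S k) - UU ep' u' y' (S k))).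
    { rewrite !S_S.
      replace (SS ep u y k + F (P k + UU ep u y (S k)) - (SS ep' u' y' k + F (P k + UU ep' u' y' (S k))))
        with ((SS ep u y k - SS ep' u' y' k) + (F (P k + UU ep u y (S k)) - F (P k + UU ep' u' y' (S k)))) by ring.
      eapply Rle_trans; [apply Rabs_triang|]. apply Rplus_le_compat_l. apply F_lip; auto; lia. }
    assert (Hm0 : 0 <= m).
    { unfold m, W. pose proof (Rabs_pos (UU ep u y k - UU ep' u' y' k)). pose proof (Rabs_pos (SS ep u y k - SS ep' u' y' k)).
      pose proof (Rabs_pos (y - y')); pose proof (QB_nonneg (ep - ep')); lra. }
    simpl pow. fold W in IHk. fold m in IHk.
    assert (Hnew : Rabs (UU ep u y (S k) - UU ep' u' y' (S k)) + Rabs (SS ep u y (S k) - SS ep' u' y' (S k)) + W <= GG * m).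
    { unfold GG. pose proof LL_pos.
      assert ((1 + LL) * Rabs (UU ep u y (S k) - UU ep' u' y' (S k)) <= (1 + LL) * ((1 + LL) * m)) by (apply Rmult_le_compat_l; lra).
      assert (Rabs (SS ep u y k - SS ep' u' y' k) + W <= m).
      { unfold m. pose proof (Rabs_pos (UU ep u y k - UU ep' u' y' k)). lra. }
      replace (((1 + LL) ^ 2 + 1) * m) with ((1 + LL) * ((1 + LL) * m) + m) by ring.
      lra. }
    eapply Rle_trans; [apply Hnew|]. rewrite Rmult_assoc. apply Rmult_le_compat_l. pose proof GG_ge1; lra. exact IHk.
Qed.

Lemma prop2 u y ep u' y' ep' k : inbox u y ep -> inbox u' y' ep' -> (k <= q)%nat ->
  Rabs (UU ep u y k - UU ep' u' y' k) <= CC * (Rabs (u - u') + Rabs (y - y') + Qr * BB * Rabs (ep - ep')) /\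
  Rabs (SS ep u y k - SS ep' u' y' k) <= CC * (Rabs (u - u') + Rabs (y - y') + Qr * BB * Rabs (ep - ep')).
Proof.
  intros Hb Hb' Hk. pose proof (prop u y ep u' y' ep' Hb Hb' k Hk) as H.
  assert (GG ^ k <= CC) by (unfold CC; apply Rle_pow; [apply GG_ge1|lia]).
  assert (0 <= Rabs (u - u') + (Rabs (y - y') + Qr * BB * Rabs (ep - ep'))).
  { pose proof (Rabs_pos (u - u')); pose proof (Rabs_pos (y - y')); pose proof (QB_nonneg (ep - ep')); lra. }
  assert (GG ^ k * (Rabs (u - u') + (Rabs (y - y') + Qr * BB * Rabs (ep - ep'))) <=
          CC * (Rabs (u - u') + (Rabs (y - y') + Qr * BB * Rabs (ep - ep')))) by (apply Rmult_le_compat_r; auto).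
  assert (0 <= Rabs (y - y') + Qr * BB * Rabs (ep - ep')).
  { pose proof (Rabs_pos (y - y')); pose proof (QB_nonneg (ep - ep')); lra. }
  pose proof (Rabs_pos (UU ep u y k - UU ep' u' y' k)). pose proof (Rabs_pos (SS ep u y k - SS ep' u' y' k)).
  split; lra.
Qed.

Lemma sumk_scal n (t : nat -> R) c : sumk n (fun k => t k * c) = sumk n t * c.
Proof. induction n. unfold sumk; simpl; ring. rewrite !sumk_S, IHn. ring. Qed.

Definition Dfun u y ep := UU ep u y q - u.
Definition Afun u y ep := SS ep u y q.
Definition tau := e * CC.

Lemma CC_pos : 0 < CC.
Proof. unfold CC. apply pow_lt. pose proof GG_ge1; lra. Qed.
Lemma tau_pos : 0 <= tau.
Proof. unfold tau. pose proof CC_pos. nra. Qed.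
Lemma Qr_pos : 0 <= Qr.
Proof. apply pos_INR. Qed.

Lemma base_D u : Rabs u <= r -> Dfun u y0 0 = 0.
Proof.
  intros. unfold Dfun. assert (forall k, UU 0 u y0 k = u).
  { induction k. reflexivity. rewrite U_S, IHk. replace (y0 + 0 * SS 0 u y0 k) with y0 by ring. ring. }
  rewrite H0. ring.
Qed.

Lemma base_A : Afun 0 y0 0 = sumk q (fun k => F (P k)).
Proof.
  unfold Afun. assert (forall k, UU 0 0 y0 k = 0 /\ SS 0 0 y0 k = sumk k (fun j => F (P j))).
  { induction k. split; reflexivity. destruct IHk as [H1 H2].
    assert (UU 0 0 y0 (S k) = 0). { rewrite U_S, H1. replace (y0 + 0 * SS 0 0 y0 k) with y0 by ring. ring. }
    split; auto. rewrite S_S, H, H2, sumk_S, Rplus_0_r. reflexivity. }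
  apply H.
Qed.

Hypothesis Htau : tau <= 1.

Lemma est_D1 u y y' ep : inbox u y ep -> inbox u y' ep ->
  Rabs (Dfun u y ep - Dfun u y' ep - sumk q a * (y - y')) <= Qr * ((eta * (1 + tau) + K * tau) * Rabs (y - y')).
Proof.
  intros Hb Hb'. pose proof tau_pos as Ht.
  pose proof (tel (fun k => UU ep u y k - UU ep u y' k) (fun k => a k * (y - y')) ((eta * (1 + tau) + K * tau) * Rabs (y - y')) q) as T.
  cbv beta in T. rewrite ?U_0 in T. rewrite Rminus_diag, Rminus_0_r, sumk_scal in T.
  unfold Dfun. replace (UU ep u y q - u - (UU ep u y' q - u)) with (UU ep u y q - UU ep u y' q) by ring.
  apply T. intros k Hk.
  destruct (prop2 u y ep u y' ep k Hb Hb' ltac:(lia)) as [_ HS].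
  rewrite !Rminus_diag, Rabs_R0, Rmult_0_r, Rplus_0_l, Rplus_0_r in HS.
  destruct (inv_rho u y ep Hb k ltac:(lia)) as [_ [_ Hy1]].
  destruct (inv_rho u y' ep Hb' k ltac:(lia)) as [_ [_ Hy2]].
  pose proof (HW k _ _ Hk Hy1 Hy2) as Hw.
  destruct Hb as [_ [_ Hep]].
  assert (Hd : Rabs (ep * (SS ep u y k - SS ep u y' k)) <= tau * Rabs (y - y')).
  { unfold tau. rewrite Rmult_assoc. apply abs_prod_le; auto. }
  assert (Hdy : Rabs (y + ep * SS ep u y k - (y' + ep * SS ep u y' k)) <= (1 + tau) * Rabs (y - y')).
  { replace (y + ep * SS ep u y k - (y' + ep * SS ep u y' k)) with ((y - y') + ep * (SS ep u y k - SS ep u y' k)) by ring.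
    eapply Rle_trans; [apply Rabs_triang|]. lra. }
  destruct (HK k Hk) as [Ha _].
  assert (Hak : Rabs (a k * (ep * (SS ep u y k - SS ep u y' k))) <= K * (tau * Rabs (y - y'))) by (apply abs_prod_le; auto).
  rewrite !U_S.
  replace (UU ep u y k + (w k (y + ep * SS ep u y k) - w k y0) - (UU ep u y' k + (w k (y' + ep * SS ep u y' k) - w k y0)) -
     (UU ep u y k - UU ep u y' k) - a k * (y - y'))
   with ((w k (y + ep * SS ep u y k) - w k (y' + ep * SS ep u y' k) - a k * (y + ep * SS ep u y k - (y' + ep * SS ep u y' k)))
         + a k * (ep * (SS ep u y k - SS ep u y' k))) by ring.
  eapply Rle_trans; [apply Rabs_triang|].
  assert (eta * Rabs (y + ep * SS ep u y k - (y' + ep * SS ep u y' k)) <= eta * ((1 + tau) * Rabs (y - y'))) by (apply Rmult_le_compat_l; lra).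
  lra.
Qed.

Lemma est_A1 u u' y ep : inbox u y ep -> inbox u' y ep ->
  Rabs (Afun u y ep - Afun u' y ep - sumk q g * (u - u')) <= Qr * ((K * (Qr * LL * tau) + eta * (1 + Qr * LL * tau)) * Rabs (u - u')).
Proof.
  intros Hb Hb'. pose proof tau_pos as Ht. pose proof Qr_pos. pose proof LL_pos.
  assert (HU : forall j, (j <= q)%nat -> Rabs (UU ep u y j - UU ep u' y j - (u - u')) <= Qr * LL * tau * Rabs (u - u')).
  { intros j Hj.
    pose proof (tel0 (fun k => UU ep u y k - UU ep u' y k) (LL * (tau * Rabs (u - u'))) j) as T. cbv beta in T. rewrite ?U_0 in T.
    eapply Rle_trans; [apply T|].
    - intros k Hk. rewrite !U_S.
      replace (UU ep u y k + (w k (y + ep * SS ep u y k) - w k y0) - (UU ep u' y k + (w k (y + ep * SS ep u' y k) - w k y0)) - (UU ep u y k - UU ep u' y k))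
        with (w k (y + ep * SS ep u y k) - w k (y + ep * SS ep u' y k)) by ring.
      destruct (inv_rho u y ep Hb k ltac:(lia)) as [_ [_ Hy1]].
      destruct (inv_rho u' y ep Hb' k ltac:(lia)) as [_ [_ Hy2]].
      eapply Rle_trans; [apply (w_lip k); auto; lia|]. apply Rmult_le_compat_l; [lra|].
      destruct (prop2 u y ep u' y ep k Hb Hb' ltac:(lia)) as [_ HS].
      rewrite !Rminus_diag, Rabs_R0, Rmult_0_r, Rplus_0_r, Rplus_0_r in HS.
      replace (y + ep * SS ep u y k - (y + ep * SS ep u' y k)) with (ep * (SS ep u y k - SS ep u' y k)) by ring.
      destruct Hb as [_ [_ Hep]]. unfold tau. rewrite Rmult_assoc. apply abs_prod_le; auto.
    - assert (INR j <= Qr) by (apply le_INR; auto).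
      replace (Qr * LL * tau * Rabs (u - u')) with (Qr * (LL * (tau * Rabs (u - u')))) by ring.
      apply Rmult_le_compat_r; auto. pose proof (Rabs_pos (u - u')). apply Rmult_le_pos; [lra|]. apply Rmult_le_pos; lra. }
  pose proof (tel (fun k => SS ep u y k - SS ep u' y k) (fun k => g k * (u - u')) ((K * (Qr * LL * tau) + eta * (1 + Qr * LL * tau)) * Rabs (u - u')) q) as T.
  cbv beta in T. rewrite ?S_0 in T. rewrite Rminus_diag, Rminus_0_r, sumk_scal in T. unfold Afun. apply T.
  intros k Hk. rewrite !S_S.
  specialize (HU (S k) Hk).
  destruct (inv_rho u y ep Hb (S k) Hk) as [Hu1 _].
  destruct (inv_rho u' y ep Hb' (S k) Hk) as [Hu2 _].
  pose proof (HF k _ _ Hk Hu1 Hu2) as Hf.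
  destruct (HK k Hk) as [_ [Hg _]].
  replace (SS ep u y k + F (P k + UU ep u y (S k)) - (SS ep u' y k + F (P k + UU ep u' y (S k))) - (SS ep u y k - SS ep u' y k) - g k * (u - u'))
    with ((F (P k + UU ep u y (S k)) - F (P k + UU ep u' y (S k)) - g k * (UU ep u y (S k) - UU ep u' y (S k)))
          + g k * (UU ep u y (S k) - UU ep u' y (S k) - (u - u'))) by ring.
  eapply Rle_trans; [apply Rabs_triang|].
  assert (Rabs (g k * (UU ep u y (S k) - UU ep u' y (S k) - (u - u'))) <= K * (Qr * LL * tau * Rabs (u - u'))) by (apply abs_prod_le; auto).
  assert (Rabs (UU ep u y (S k) - UU ep u' y (S k)) <= (1 + Qr * LL * tau) * Rabs (u - u')).
  { pose proof (Rabs_triang (UU ep u y (S k) - UU ep u' y (S k) - (u - u')) (u - u')) as Htr.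
    replace (UU ep u y (S k) - UU ep u' y (S k) - (u - u') + (u - u')) with (UU ep u y (S k) - UU ep u' y (S k)) in Htr by ring.
    lra. }
  assert (eta * Rabs (UU ep u y (S k) - UU ep u' y (S k)) <= eta * ((1 + Qr * LL * tau) * Rabs (u - u'))) by (apply Rmult_le_compat_l; lra).
  lra.
Qed.

Lemma est_D2 u u' y ep ep' : inbox u y ep -> inbox u' y ep' ->
  Rabs (Dfun u y ep - Dfun u' y ep') <= Qr * LL * tau * Rabs (u - u') + Qr * LL * (tau * Qr * BB + Qr * BB) * Rabs (ep - ep').
Proof.
  intros Hb Hb'. pose proof tau_pos as Ht. pose proof Qr_pos. pose proof LL_pos. pose proof BB_pos.
  pose proof (tel0 (fun k => UU ep u y k - UU ep' u' y k) (LL * (tau * (Rabs (u - u') + Qr * BB * Rabs (ep - ep')) + Qr * BB * Rabs (ep - ep'))) q) as T.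
  cbv beta in T. rewrite ?U_0 in T. unfold Dfun.
  replace (UU ep u y q - u - (UU ep' u' y q - u')) with (UU ep u y q - UU ep' u' y q - (u - u')) by ring.
  eapply Rle_trans; [apply T|].
  - intros k Hk. rewrite !U_S.
    replace (UU ep u y k + (w k (y + ep * SS ep u y k) - w k y0) - (UU ep' u' y k + (w k (y + ep' * SS ep' u' y k) - w k y0)) - (UU ep u y k - UU ep' u' y k))
      with (w k (y + ep * SS ep u y k) - w k (y + ep' * SS ep' u' y k)) by ring.
    destruct (inv_rho u y ep Hb k ltac:(lia)) as [_ [_ Hy1]].
    destruct (inv_rho u' y ep' Hb' k ltac:(lia)) as [_ [_ Hy2]].
    eapply Rle_trans; [apply (w_lip k); auto; lia|]. apply Rmult_le_compat_l; [lra|].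
    destruct (prop2 u y ep u' y ep' k Hb Hb' ltac:(lia)) as [_ HS].
    rewrite !Rminus_diag, Rabs_R0, Rplus_0_r in HS.
    pose proof (dyk u y ep u' y ep' k Hb Hb' ltac:(lia)) as Hd.
    rewrite Rminus_diag, Rabs_R0, Rplus_0_l in Hd.
    assert (e * Rabs (SS ep u y k - SS ep' u' y k) <= e * (CC * (Rabs (u - u') + Qr * BB * Rabs (ep - ep')))) by (apply Rmult_le_compat_l; lra).
    unfold tau. lra.
  - unfold Qr. pose proof (Rabs_pos (u - u')). pose proof (Rabs_pos (ep - ep')). pose proof (QB_nonneg (ep - ep')).
    right. unfold Qr. ring.
Qed.

Lemma est_A2 u y y' ep ep' : inbox u y ep -> inbox u y' ep' ->
  Rabs (Afun u y ep - Afun u y' ep') <= Qr * Qr * LL * LL * (1 + tau) * Rabs (y - y') + Qr * Qr * LL * LL * (tau + 1) * Qr * BB * Rabs (ep - ep').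
Proof.
  intros Hb Hb'. pose proof tau_pos as Ht. pose proof Qr_pos. pose proof LL_pos. pose proof BB_pos.
  set (Z := (1 + tau) * Rabs (y - y') + (tau + 1) * (Qr * BB * Rabs (ep - ep'))).
  assert (HZ : 0 <= Z). { unfold Z. pose proof (Rabs_pos (y - y')). pose proof (QB_nonneg (ep - ep')). nra. }
  assert (HU : forall j, (j <= q)%nat -> Rabs (UU ep u y j - UU ep' u y' j) <= Qr * (LL * Z)).
  { intros j Hj.
    pose proof (tel0 (fun k => UU ep u y k - UU ep' u y' k) (LL * Z) j) as T. cbv beta in T. rewrite ?U_0 in T.
    rewrite Rminus_diag, Rminus_0_r in T. eapply Rle_trans; [apply T|].
    - intros k Hk. rewrite !U_S.
      replace (UU ep u y k + (w k (y + ep * SS ep u y k) - w k y0) - (UU ep' u y' k + (w k (y' + ep' * SS ep' u y' k) - w k y0)) - (UU ep u y k - UU ep' u y' k))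
        with (w k (y + ep * SS ep u y k) - w k (y' + ep' * SS ep' u y' k)) by ring.
      destruct (inv_rho u y ep Hb k ltac:(lia)) as [_ [_ Hy1]].
      destruct (inv_rho u y' ep' Hb' k ltac:(lia)) as [_ [_ Hy2]].
      eapply Rle_trans; [apply (w_lip k); auto; lia|]. apply Rmult_le_compat_l; [lra|].
      destruct (prop2 u y ep u y' ep' k Hb Hb' ltac:(lia)) as [_ HS].
      rewrite !Rminus_diag, Rabs_R0, Rplus_0_l in HS.
      pose proof (dyk u y ep u y' ep' k Hb Hb' ltac:(lia)) as Hd.
      assert (e * Rabs (SS ep u y k - SS ep' u y' k) <= e * (CC * (Rabs (y - y') + Qr * BB * Rabs (ep - ep')))) by (apply Rmult_le_compat_l; lra).
      unfold Z, tau. lra.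
    - apply Rmult_le_compat_r; [nra|]. apply le_INR; auto. }
  pose proof (tel0 (fun k => SS ep u y k - SS ep' u y' k) (LL * (Qr * (LL * Z))) q) as T. cbv beta in T. rewrite ?S_0 in T.
  rewrite Rminus_diag, Rminus_0_r in T. unfold Afun.
  eapply Rle_trans; [apply T|].
  - intros k Hk. rewrite !S_S.
    replace (SS ep u y k + F (P k + UU ep u y (S k)) - (SS ep' u y' k + F (P k + UU ep' u y' (S k))) - (SS ep u y k - SS ep' u y' k))
      with (F (P k + UU ep u y (S k)) - F (P k + UU ep' u y' (S k))) by ring.
    destruct (inv_rho u y ep Hb (S k) Hk) as [Hu1 _].
    destruct (inv_rho u y' ep' Hb' (S k) Hk) as [Hu2 _].
    eapply Rle_trans; [apply F_lip; auto|]. apply Rmult_le_compat_l; [lra|]. apply HU; auto.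
  - right. unfold Z. unfold Qr. ring.
Qed.

Lemma est_A u y ep u' y' ep' : inbox u y ep -> inbox u' y' ep' ->
  Rabs (Afun u y ep - Afun u' y' ep') <= CC * (Rabs (u - u') + Rabs (y - y') + Qr * BB * Rabs (ep - ep')).
Proof. intros. apply (prop2 u y ep u' y' ep' q); auto. Qed.

End Orbit.


Lemma sumk_ge_term n (t : nat -> R) k : (forall j, (j < n)%nat -> 0 <= t j) -> (k < n)%nat -> t k <= sumk n t.
Proof.
  induction n; intros H Hk; [lia|]. rewrite sumk_S.
  assert (0 <= sumk n t).
  { clear IHn Hk. induction n. unfold sumk; simpl; lra. rewrite sumk_S. assert (0 <= t n) by (apply H; lia).
    assert (0 <= sumk n t) by (apply IHn; intros; apply H; lia). lra. }
  destruct (Nat.eq_dec k n) as [->|]. lra.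
  assert (t k <= sumk n t) by (apply IHn; [intros; apply H; lia|lia]).
  assert (0 <= t n) by (apply H; lia). lra.
Qed.

Section Concrete.
Variables (d : nat) (pa pb : Rbar) (b om : nat -> R -> R) (f : R -> R)
  (q : nat) (x0 y0 : R) (alpha : nat -> nat).
Hypotheses (Hfam : IEM_family d pa pb b om)
  (Hf : smooth f) (Hfper : forall x, f (x + 1) = f x)
  (Hq : (1 <= q)%nat)
  (Hy0 : inP pa pb y0)
  (Hx0 : 0 <= x0 < 1)
  (Hper : Nat.iter q (IEM d b om y0) x0 = x0)
  (Hint : forall k, (k < q)%nat ->
     (alpha k < d)%nat /\
     b (alpha k) y0 < lift b y0 (Nat.iter k (IEM d b om y0) x0) < b (S (alpha k)) y0).

Definition xs k := Nat.iter k (IEM d b om y0) x0.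
Definition ww k := om (alpha k).
Definition Pk k := xs (S k).

Lemma xs_S k : xs (S k) = IEM d b om y0 (xs k).
Proof. reflexivity. Qed.

Lemma xs_range k : 0 <= xs k < 1.
Proof. destruct k. exact Hx0. rewrite xs_S. unfold IEM. apply frac_range. Qed.

Lemma margins : exists rm, 0 < rm /\ forall k, (k < q)%nat -> forall u y, Rabs u < rm -> Rabs (y - y0) < rm ->
  inP pa pb y /\ b (alpha k) y < lift b y0 (xs k) + u < b (S (alpha k)) y.
Proof.
  apply (finite_min (fun k rm => forall u y, Rabs u < rm -> Rabs (y - y0) < rm ->
     inP pa pb y /\ b (alpha k) y < lift b y0 (xs k) + u < b (S (alpha k)) y)).
  { intros k r0 r' [Hr' Hle] H u y Hu Hy. apply H; lra. }
  intros k Hk. destruct (Hint k Hk) as [Hal [H1 H2]]. fold (xs k) in H1, H2.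
  destruct Hfam as [_ [_ [_ [Hb _]]]].
  set (L := lift b y0 (xs k)) in *.
  set (gam := Rmin (L - b (alpha k) y0) (b (S (alpha k)) y0 - L) / 2).
  assert (Hgam : 0 < gam) by (unfold gam; assert (0 < Rmin (L - b (alpha k) y0) (b (S (alpha k)) y0 - L)) by (apply Rmin_glb_lt; lra); lra).
  assert (Hg1 : gam <= (L - b (alpha k) y0) / 2) by (unfold gam; pose proof (Rmin_l (L - b (alpha k) y0) (b (S (alpha k)) y0 - L)); lra).
  assert (Hg2 : gam <= (b (S (alpha k)) y0 - L) / 2) by (unfold gam; pose proof (Rmin_r (L - b (alpha k) y0) (b (S (alpha k)) y0 - L)); lra).
  destruct (Hb (alpha k) ltac:(lia) y0 Hy0) as [Hd1 _].
  destruct (Hb (S (alpha k)) ltac:(lia) y0 Hy0) as [Hd2 _].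
  destruct (cont_eps _ _ (ex_derive_continuous _ _ Hd1) gam Hgam) as [dl1 [Hdl1 Hc1]].
  destruct (cont_eps _ _ (ex_derive_continuous _ _ Hd2) gam Hgam) as [dl2 [Hdl2 Hc2]].
  destruct (inP_nbhd pa pb y0 Hy0) as [s0 [Hs0 HP]].
  exists (Rmin gam (Rmin s0 (Rmin dl1 dl2))). split.
  { repeat apply Rmin_glb_lt; auto. }
  intros u y Hu Hy.
  assert (Hm1 := Rmin_l gam (Rmin s0 (Rmin dl1 dl2))). assert (Hm2 := Rmin_r gam (Rmin s0 (Rmin dl1 dl2))).
  assert (Hm3 := Rmin_l s0 (Rmin dl1 dl2)). assert (Hm4 := Rmin_r s0 (Rmin dl1 dl2)).
  assert (Hm5 := Rmin_l dl1 dl2). assert (Hm6 := Rmin_r dl1 dl2).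
  split. apply HP; lra.
  specialize (Hc1 y ltac:(lra)). specialize (Hc2 y ltac:(lra)).
  apply Rabs_def2 in Hc1. apply Rabs_def2 in Hc2. apply Rabs_def2 in Hu. lra.
Qed.

Lemma b_order y : inP pa pb y -> (forall al, (al < d)%nat -> b al y < b (S al) y) /\ b d y = b 0%nat y + 1.
Proof. intros H. destruct Hfam as [_ [_ [Hb _]]]. apply Hb; auto. Qed.

Lemma step_lemma rm : (forall k, (k < q)%nat -> forall u y, Rabs u < rm -> Rabs (y - y0) < rm ->
  inP pa pb y /\ b (alpha k) y < lift b y0 (xs k) + u < b (S (alpha k)) y) ->
  forall k u y, (k < q)%nat -> Rabs u < rm -> Rabs (y - y0) < rm ->
  IEM d b om y (frac_part (xs k + u)) = frac_part (xs k + u + ww k y).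
Proof.
  intros Hm k u y Hk Hu Hy. destruct (Hm k Hk u y Hu Hy) as [HP Hl].
  destruct (b_order y HP). apply (IEM_step d b om y y0); auto. apply Hint; auto.
Qed.

Notation UU ep u y k := (fst (orb ww Pk f y0 ep u y k)).
Notation SS ep u y k := (snd (orb ww Pk f y0 ep u y k)).

Lemma corr rm : 0 < rm -> (forall k, (k < q)%nat -> forall u y, Rabs u < rm -> Rabs (y - y0) < rm ->
  inP pa pb y /\ b (alpha k) y < lift b y0 (xs k) + u < b (S (alpha k)) y) ->
  forall ep u y, (forall k, (k < q)%nat -> Rabs (UU ep u y k) < rm /\ Rabs (y + ep * SS ep u y k - y0) < rm) ->
  forall k, (k <= q)%nat ->
  Nat.iter k (Tmap d b om f ep) (frac_part (x0 + u), y) = (frac_part (xs k + UU ep u y k), y + ep * SS ep u y k).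
Proof.
  intros Hrm Hm ep u y Hb k. induction k; intros Hk.
  - simpl. f_equal. ring.
  - rewrite Nat.iter_succ. rewrite IHk by lia. unfold Tmap. simpl fst; simpl snd.
    destruct (Hb k ltac:(lia)) as [Hu Hy].
    rewrite (step_lemma rm Hm k _ _ ltac:(lia) Hu Hy).
    assert (Hx : xs (S k) = frac_part (xs k + ww k y0)).
    { rewrite xs_S. pose proof (step_lemma rm Hm k 0 y0 ltac:(lia) ltac:(rewrite Rabs_R0; lra) ltac:(rewrite Rminus_diag, Rabs_R0; lra)) as Hs.
      rewrite !Rplus_0_r in Hs. rewrite frac_id in Hs by apply xs_range. exact Hs. }
    assert (E : frac_part (xs k + UU ep u y k + ww k (y + ep * SS ep u y k)) = frac_part (xs (S k) + UU ep u y (S k))).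
    { rewrite Hx, frac_frac_plus. apply f_equal. simpl. ring. }
    rewrite E. apply f_equal2; [reflexivity|]. rewrite per_frac by auto.
    rewrite (U_S ww (fun k0 => xs (S k0)) f y0). unfold Pk. ring.
Qed.

End Concrete.

Lemma le_div_mult Y t X : 0 < Y -> t <= X / Y -> Y * t <= X.
Proof. intros HY H. apply Rmult_le_compat_l with (r := Y) in H; [|lra]. replace (Y * (X / Y)) with X in H by (field; lra). lra. Qed.

Lemma min_le_l a b c : a <= Rmin b c -> a <= b.
Proof. intros. pose proof (Rmin_l b c). lra. Qed.
Lemma min_le_r a b c : a <= Rmin b c -> a <= c.
Proof. intros. pose proof (Rmin_r b c). lra. Qed.


Section Concrete2.
Variables (d : nat) (pa pb : Rbar) (b om : nat -> R -> R) (f : R -> R)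
  (q : nat) (x0 y0 : R) (alpha : nat -> nat).
Hypotheses (Hfam : IEM_family d pa pb b om)
  (Hf : smooth f) (Hfper : forall x, f (x + 1) = f x)
  (Hq : (1 <= q)%nat)
  (Hy0 : inP pa pb y0)
  (Hx0 : 0 <= x0 < 1)
  (Hper : Nat.iter q (IEM d b om y0) x0 = x0)
  (Hint : forall k, (k < q)%nat ->
     (alpha k < d)%nat /\
     b (alpha k) y0 < lift b y0 (Nat.iter k (IEM d b om y0) x0) < b (S (alpha k)) y0).

Notation xs := (xs d b om x0 y0).
Notation ww := (ww om alpha).
Notation Pk := (Pk d b om x0 y0).

Lemma lin_w eta : 0 < eta -> exists sg, 0 < sg /\ forall k, (k < q)%nat -> forall z z', Rabs (z - y0) <= sg -> Rabs (z' - y0) <= sg ->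
  Rabs (ww k z - ww k z' - Derive (ww k) y0 * (z - z')) <= eta * Rabs (z - z').
Proof.
  intros Heta.
  apply (finite_min (fun k sg => forall z z', Rabs (z - y0) <= sg -> Rabs (z' - y0) <= sg ->
    Rabs (ww k z - ww k z' - Derive (ww k) y0 * (z - z')) <= eta * Rabs (z - z'))).
  { intros k r0 r' [Hr' Hle] H z z' Hz Hz'. apply H; lra. }
  intros k Hk. destruct (Hint k Hk) as [Hal _].
  destruct Hfam as [_ [_ [_ [_ Hom]]]]. specialize (Hom (alpha k) Hal).
  destruct (inP_nbhd pa pb y0 Hy0) as [s0 [Hs0 HP]].
  apply (lin_lemma (ww k) y0).
  - exists s0. split; auto. intros z Hz. apply (Hom z (HP z Hz)).
  - apply (Hom y0 Hy0).
  - exact Heta.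
Qed.

Lemma lin_f eta : 0 < eta -> exists rf, 0 < rf /\ forall k, (k < q)%nat -> forall v v', Rabs v <= rf -> Rabs v' <= rf ->
  Rabs (f (Pk k + v) - f (Pk k + v') - Derive f (Pk k) * (v - v')) <= eta * Rabs (v - v').
Proof.
  intros Heta.
  apply (finite_min (fun k rf => forall v v', Rabs v <= rf -> Rabs v' <= rf ->
    Rabs (f (Pk k + v) - f (Pk k + v') - Derive f (Pk k) * (v - v')) <= eta * Rabs (v - v'))).
  { intros k r0 r' [Hr' Hle] H v v' Hv Hv'. apply H; lra. }
  intros k Hk.
  destruct (lin_lemma f (Pk k)) with (eta := eta) as [rf [Hrf H]]; auto.
  - exists 1. split; [lra|]. intros z _. exact (Hf 1%nat z).
  - apply (ex_derive_continuous (Derive f)). exact (Hf 2%nat (Pk k)).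
  - exists rf. split; auto. intros v v' Hv Hv'.
    specialize (H (Pk k + v) (Pk k + v')). replace (Pk k + v - (Pk k + v')) with (v - v') in H by ring.
    apply H; replace (Pk k + v - Pk k) with v by ring; replace (Pk k + v' - Pk k) with v' by ring; auto.
Qed.

End Concrete2.


Lemma ineqD1 Q eta tau K LLv A X : 0 < Q -> 0 <= eta -> 0 <= tau <= 1 -> 0 <= K <= LLv -> 0 <= X ->
  Q * eta <= A / 8 -> Q * LLv * tau <= A / 4 -> Q * ((eta * (1 + tau) + K * tau) * X) <= A / 2 * X.
Proof.
  intros. assert (Q * (eta * (1 + tau) + K * tau) <= A / 2).
  { assert (Q * eta * tau <= Q * eta * 1) by (apply Rmult_le_compat_l; nra).
    assert (Q * K * tau <= Q * LLv * tau) by (apply Rmult_le_compat_r; nra). nra. }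
  rewrite <- Rmult_assoc. apply Rmult_le_compat_r; auto.
Qed.

Lemma ineqA1 Q eta tau K LLv C X : 0 < Q -> 0 <= eta -> 0 <= tau -> 0 <= K <= LLv -> 0 <= X ->
  Q * LLv * tau <= 1 -> Q * eta <= C / 16 -> Q * Q * LLv * LLv * tau <= C / 8 ->
  Q * ((K * (Q * LLv * tau) + eta * (1 + Q * LLv * tau)) * X) <= C / 4 * X.
Proof.
  intros. assert (Q * (K * (Q * LLv * tau) + eta * (1 + Q * LLv * tau)) <= C / 4).
  { assert (0 <= Q * LLv * tau) by (apply Rmult_le_pos; nra).
    assert (Q * K * (Q * LLv * tau) <= Q * LLv * (Q * LLv * tau)) by (apply Rmult_le_compat_r; nra).
    assert (Q * eta * (Q * LLv * tau) <= Q * eta * 1) by (apply Rmult_le_compat_l; nra). nra. }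
  rewrite <- Rmult_assoc. apply Rmult_le_compat_r; auto.
Qed.

Lemma ineqS Q tau LLv A C : 0 < Q -> 0 <= tau <= 1 -> 0 <= LLv ->
  Q * Q * Q * LLv * LLv * LLv * tau <= A * C / 16 ->
  8 * (Q * Q * LLv * LLv * (1 + tau) * (Q * LLv * tau)) <= A * C.
Proof.
  intros. assert (0 <= Q * Q * Q * LLv * LLv * LLv * tau) by (repeat apply Rmult_le_pos; lra).
  replace (Q * Q * LLv * LLv * (1 + tau) * (Q * LLv * tau)) with ((Q * Q * Q * LLv * LLv * LLv * tau) * (1 + tau)) by ring.
  assert ((Q * Q * Q * LLv * LLv * LLv * tau) * (1 + tau) <= (Q * Q * Q * LLv * LLv * LLv * tau) * 2) by (apply Rmult_le_compat_l; lra).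
  lra.
Qed.

Lemma ineqE1 Q tau LLv BBv e A s : 0 <= Q -> 0 <= tau <= 1 -> 0 <= LLv -> 0 <= BBv -> 0 <= e -> 0 < A * s ->
  Q * Q * LLv * BBv * e <= A * s / 8 -> 2 * (Q * LLv * (tau * Q * BBv + Q * BBv) * e) < A * s.
Proof.
  intros. assert (0 <= Q * Q * LLv * BBv * e) by (repeat apply Rmult_le_pos; lra).
  replace (Q * LLv * (tau * Q * BBv + Q * BBv) * e) with ((Q * Q * LLv * BBv * e) * (1 + tau)) by ring.
  assert ((Q * Q * LLv * BBv * e) * (1 + tau) <= (Q * Q * LLv * BBv * e) * 2) by (apply Rmult_le_compat_l; lra).
  lra.
Qed.

Lemma ineqE2 Q tau LLv BBv e C r s : 0 <= Q -> 0 <= tau <= 1 -> 0 <= LLv -> 0 <= BBv -> 0 <= e -> 0 <= s -> 0 < C * r ->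
  Q * Q * LLv * LLv * s <= C * r / 16 -> Q * Q * Q * LLv * LLv * BBv * e <= C * r / 32 ->
  4 * (Q * Q * LLv * LLv * (1 + tau) * s + Q * Q * LLv * LLv * (tau + 1) * Q * BBv * e) < C * r.
Proof.
  intros. assert (0 <= Q * Q * LLv * LLv * s) by (repeat apply Rmult_le_pos; lra).
  assert (0 <= Q * Q * Q * LLv * LLv * BBv * e) by (repeat apply Rmult_le_pos; lra).
  replace (Q * Q * LLv * LLv * (1 + tau) * s + Q * Q * LLv * LLv * (tau + 1) * Q * BBv * e)
    with ((Q * Q * LLv * LLv * s) * (1 + tau) + (Q * Q * Q * LLv * LLv * BBv * e) * (1 + tau)) by ring.
  assert ((Q * Q * LLv * LLv * s) * (1 + tau) <= (Q * Q * LLv * LLv * s) * 2) by (apply Rmult_le_compat_l; lra).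
  assert ((Q * Q * Q * LLv * LLv * BBv * e) * (1 + tau) <= (Q * Q * Q * LLv * LLv * BBv * e) * 2) by (apply Rmult_le_compat_l; lra).
  lra.
Qed.

Lemma rmin_pos a b : 0 < a -> 0 < b -> 0 < Rmin a b.
Proof. intros; apply Rmin_glb_lt; auto. Qed.

Lemma div_pos' a b : 0 < a -> 0 < b -> 0 < a / b.
Proof. intros; apply Rdiv_lt_0_compat; auto. Qed.


Ltac mintac := unfold Rmin; repeat destruct Rle_dec; lra.

Section Main.
Variables (d : nat) (pa pb : Rbar) (b om : nat -> R -> R) (f : R -> R)
  (q : nat) (x0 y0 : R) (alpha : nat -> nat).
Hypotheses (Hfam : IEM_family d pa pb b om)
  (Hf : smooth f) (Hfper : forall x, f (x + 1) = f x)
  (Hq : (1 <= q)%nat)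
  (Hy0 : inP pa pb y0)
  (Hx0 : 0 <= x0 < 1)
  (Hper : Nat.iter q (IEM d b om y0) x0 = x0)
  (Hint : forall k, (k < q)%nat ->
     (alpha k < d)%nat /\
     b (alpha k) y0 < lift b y0 (Nat.iter k (IEM d b om y0) x0) < b (S (alpha k)) y0).

Notation xs := (xs d b om x0 y0).
Notation ww := (ww om alpha).
Notation Pk := (Pk d b om x0 y0).
Notation UU ep u y k := (fst (orb ww Pk f y0 ep u y k)).
Notation SS ep u y k := (snd (orb ww Pk f y0 ep u y k)).

Definition a_ k := Derive (ww k) y0.
Definition g_ k := Derive f (Pk k).
Definition Kc := sumk q (fun k => Rabs (a_ k) + Rabs (g_ k) + Rabs (f (Pk k))).

Lemma Kc_bound : forall k, (k < q)%nat -> Rabs (a_ k) <= Kc /\ Rabs (g_ k) <= Kc /\ Rabs (f (Pk k)) <= Kc.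
Proof.
  intros k Hk.
  assert (Rabs (a_ k) + Rabs (g_ k) + Rabs (f (Pk k)) <= Kc).
  { apply (sumk_ge_term q (fun k => Rabs (a_ k) + Rabs (g_ k) + Rabs (f (Pk k)))); auto.
    intros. pose proof (Rabs_pos (a_ j)). pose proof (Rabs_pos (g_ j)). pose proof (Rabs_pos (f (Pk j))). lra. }
  pose proof (Rabs_pos (a_ k)). pose proof (Rabs_pos (g_ k)). pose proof (Rabs_pos (f (Pk k))). lra.
Qed.

Lemma Kc_nonneg : 0 <= Kc.
Proof. destruct (Kc_bound 0 ltac:(lia)) as [H _]. pose proof (Rabs_pos (a_ 0)). lra. Qed.

Lemma xs_q : xs q = xs 0.
Proof. exact Hper. Qed.

Lemma shift_sum (h : R -> R) : sumk q (fun k => h (Pk k)) = sumk q (fun k => h (xs k)).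
Proof. unfold Pk. apply (sumk_shift q (fun k => h (xs k))). rewrite xs_q. reflexivity. Qed.

Lemma Qr_ge1 : 1 <= Qr q.
Proof. unfold Qr. replace 1 with (INR 1) by reflexivity. apply le_INR; auto. Qed.

Lemma LL_ge1 : 1 <= LL Kc.
Proof. unfold LL. pose proof Kc_nonneg. lra. Qed.

Section Box.
Variables (rm rho sig eta r s e : R).
Hypotheses (Hrm : 0 < rm) (Hm : forall k, (k < q)%nat -> forall u y, Rabs u < rm -> Rabs (y - y0) < rm ->
  inP pa pb y /\ b (alpha k) y < lift b y0 (xs k) + u < b (S (alpha k)) y).
Hypothesis HW : forall k z z', (k < q)%nat -> Rabs (z - y0) <= sig -> Rabs (z' - y0) <= sig ->
  Rabs (ww k z - ww k z' - a_ k * (z - z')) <= eta * Rabs (z - z').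
Hypothesis HF : forall k v v', (k < q)%nat -> Rabs v <= rho -> Rabs v' <= rho ->
  Rabs (f (Pk k + v) - f (Pk k + v') - g_ k * (v - v')) <= eta * Rabs (v - v').
Hypotheses (Heta : 0 <= eta <= 1) (Hrho : 0 < rho <= 1) (Hsig : 0 < sig)
  (He : 0 < e) (Hr2 : r <= rho / 2) (Hs2 : s <= sig / 2)
  (Hqs : Qr q * LL Kc * sig <= rho / 2) (Hqe : e * Qr q * BB Kc <= sig / 2) (He1 : e <= 1)
  (Hrho4 : rho <= 1 / 4) (Hrm1 : rho <= rm / 2) (Hrm2 : sig <= rm / 2).

Lemma box_inv u y ep : inbox y0 r s e u y ep -> forall k, (k <= q)%nat ->
  Rabs (UU ep u y k) <= rho /\ Rabs (SS ep u y k) <= Qr q * BB Kc /\ Rabs (y + ep * SS ep u y k - y0) <= sig.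
Proof.
  intros Hb k Hk. apply (inv_rho ww Pk f q y0 rho sig eta Kc a_ g_ HW HF Kc_bound Heta Hrho Hsig Kc_nonneg r s e He Hr2 Hs2 Hqs Hqe u y ep Hb k Hk).
Qed.

Lemma box_iter u y ep : inbox y0 r s e u y ep ->
  Nat.iter q (Tmap d b om f ep) (frac_part (x0 + u), y) = (frac_part (x0 + UU ep u y q), y + ep * SS ep u y q).
Proof.
  intros Hb.
  rewrite (corr d pa pb b om f q x0 y0 alpha Hfam Hfper Hq Hx0 Hint rm Hrm Hm ep u y); auto.
  - rewrite xs_q. reflexivity.
  - intros k Hk. destruct (box_inv u y ep Hb k ltac:(lia)) as [H1 [_ H3]]. split; lra.
Qed.

Lemma box_fix u y ep : inbox y0 r s e u y ep ->
  (Nat.iter q (Tmap d b om f ep) (frac_part (x0 + u), y) = (frac_part (x0 + u), y) <->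
   Dfun ww Pk f q y0 u y ep = 0 /\ ep * Afun ww Pk f q y0 u y ep = 0).
Proof.
  intros Hb. rewrite box_iter by auto. unfold Dfun, Afun.
  destruct (box_inv u y ep Hb q ltac:(lia)) as [H1 _]. destruct Hb as [Hu _].
  split.
  - intros Heq. injection Heq as E1 E2. split; [|lra].
    destruct (frac_eq _ _ E1) as [z Hz].
    assert (Rabs (IZR z) < 1).
    { rewrite <- Hz. replace (x0 + UU ep u y q - (x0 + u)) with (UU ep u y q - u) by ring.
      eapply Rle_lt_trans; [apply Rabs_triang|]. rewrite Rabs_Ropp. lra. }
    apply IZR_small in H. subst z. simpl in Hz. lra.
  - intros [E1 E2]. f_equal. f_equal. lra. lra.
Qed.

End Box.

Lemma part_ii : sumk q (fun k => f (xs k)) <> 0 ->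
   exists eps0, 0 < eps0 /\
   exists U : R * R -> Prop, is_nbhd U (x0, y0) /\
   forall eps, 0 < Rabs eps < eps0 ->
     forall x y, 0 <= x < 1 -> U (x, y) -> Nat.iter q (Tmap d b om f eps) (x, y) <> (x, y).
Proof.
  intros HS0. rewrite <- shift_sum in HS0. set (S0 := sumk q (fun k => f (Pk k))) in *.
  assert (HS0p : 0 < Rabs S0) by (apply Rabs_pos_lt; auto).
  destruct (margins d pa pb b om q x0 y0 alpha Hfam Hq Hy0 Hint) as [rm [Hrm Hm]].
  destruct (lin_w d pa pb b om q x0 y0 alpha Hfam Hy0 Hint 1 ltac:(lra)) as [sw [Hsw HWw]].
  destruct (lin_f d b om f q x0 y0 Hf 1 ltac:(lra)) as [rf [Hrf HFf]].
  pose proof Qr_ge1 as HQ. pose proof LL_ge1 as HL. pose proof Kc_nonneg as HK0.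
  pose proof (BB_pos Kc HK0) as HB. pose proof (CC_pos q Kc HK0) as HC.
  set (Q := Qr q) in *. set (LLv := LL Kc) in *. set (BBv := BB Kc) in *. set (CCv := CC q Kc) in *.
  assert (HQB : 0 < Q * BBv) by nra. assert (HCQB : 0 < CCv * (Q * BBv)) by nra. assert (HQL : 0 < Q * LLv) by nra.
  set (rho := Rmin (Rmin rf (rm / 2)) (1 / 4)).
  assert (Hrho : 0 < rho) by (unfold rho; repeat apply rmin_pos; lra).
  assert (Hrho1 : rho <= rf) by (unfold rho; mintac).
  assert (Hrho2 : rho <= rm / 2) by (unfold rho; mintac).
  assert (Hrho3 : rho <= 1 / 4) by (unfold rho; mintac).
  set (sig := Rmin (Rmin sw (rm / 2)) (rho / (2 * (Q * LLv)))).
  assert (Hsig : 0 < sig) by (unfold sig; repeat apply rmin_pos; try apply div_pos'; nra).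
  assert (Hsig1 : sig <= sw) by (unfold sig; mintac).
  assert (Hsig2 : sig <= rm / 2) by (unfold sig; mintac).
  assert (Hsig3 : (2 * (Q * LLv)) * sig <= rho) by (apply le_div_mult; [nra|]; unfold sig; mintac).
  set (r := Rmin (rho / 2) (Rabs S0 / (4 * CCv))).
  assert (Hr : 0 < r) by (unfold r; apply rmin_pos; apply div_pos'; lra).
  assert (Hr1 : r <= rho / 2) by (unfold r; mintac).
  assert (Hr2 : (4 * CCv) * r <= Rabs S0) by (apply le_div_mult; [lra|]; unfold r; mintac).
  set (s := Rmin (sig / 2) (Rabs S0 / (4 * CCv))).
  assert (Hs : 0 < s) by (unfold s; apply rmin_pos; apply div_pos'; lra).
  assert (Hs1 : s <= sig / 2) by (unfold s; mintac).
  assert (Hs2 : (4 * CCv) * s <= Rabs S0) by (apply le_div_mult; [lra|]; unfold s; mintac).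
  set (e := Rmin (Rmin 1 ((sig / 2) / (Q * BBv))) (Rabs S0 / (4 * (CCv * (Q * BBv))))).
  assert (He : 0 < e) by (unfold e; repeat apply rmin_pos; repeat apply div_pos'; nra).
  assert (He1 : e <= 1) by (unfold e; mintac).
  assert (He2 : (Q * BBv) * e <= sig / 2) by (apply le_div_mult; [nra|]; unfold e; mintac).
  assert (He3 : (4 * (CCv * (Q * BBv))) * e <= Rabs S0) by (apply le_div_mult; [nra|]; unfold e; mintac).
  assert (HW : forall k z z', (k < q)%nat -> Rabs (z - y0) <= sig -> Rabs (z' - y0) <= sig ->
    Rabs (ww k z - ww k z' - a_ k * (z - z')) <= 1 * Rabs (z - z')).
  { intros k z z' Hk Hz Hz'. apply HWw; auto; lra. }
  assert (HF : forall k v v', (k < q)%nat -> Rabs v <= rho -> Rabs v' <= rho ->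
    Rabs (f (Pk k + v) - f (Pk k + v') - g_ k * (v - v')) <= 1 * Rabs (v - v')).
  { intros k v v' Hk Hv Hv'. apply HFf; auto; lra. }
  assert (Heta : 0 <= 1 <= 1) by lra.
  assert (Hrho' : 0 < rho <= 1) by lra.
  assert (Hqs : Q * LLv * sig <= rho / 2) by lra.
  assert (Hqe : e * Q * BBv <= sig / 2) by (replace (e * Q * BBv) with ((Q * BBv) * e) by ring; lra).
  exists e. split; auto.
  exists (fun p => 0 <= fst p < 1 /\ cdist (fst p) x0 < r /\ Rabs (snd p - y0) < s).
  split.
  { exists (Rmin r s). split. apply rmin_pos; auto. intros x y Hx Hc Hy. simpl in *.
    split; auto. split. pose proof (Rmin_l r s); lra. pose proof (Rmin_r r s); lra. }
  intros eps [Hep0 Hep] x y Hx [_ [Hcd Hy]]. simpl in Hcd, Hy.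
  destruct (cdist_disp x x0 r Hx Hx0 Hcd) as [u [Hu Hxu]].
  assert (Hb : inbox y0 r s e u y eps) by (split; [|split]; lra).
  subst x. intro Hfix.
  pose proof (box_iter rm rho sig 1 r s e Hrm Hm HW HF Heta Hrho' Hsig He Hr1 Hs1 Hqs Hqe Hrho2 Hsig2 u y eps Hb) as E.
  rewrite Hfix in E. injection E as _ E2.
  assert (HA : eps * Afun ww Pk f q y0 u y eps = 0) by (unfold Afun; lra).
  apply Rmult_integral in HA. destruct HA as [HA|HA]. rewrite HA, Rabs_R0 in Hep0; lra.
  pose proof (est_A ww Pk f q y0 rho sig 1 Kc a_ g_ HW HF Kc_bound Heta Hrho' Hsig Kc_nonneg r s e He Hr1 Hs1 Hqs Hqe He1
     u y eps 0 y0 0 Hb) as HA2.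
  assert (Hb0 : inbox y0 r s e 0 y0 0) by (split; [|split]; rewrite ?Rminus_diag, Rabs_R0; lra).
  specialize (HA2 Hb0). rewrite HA, (base_A ww Pk f q y0) in HA2. fold S0 in HA2.
  rewrite !Rminus_0_r in HA2. rewrite Rminus_0_l, Rabs_Ropp in HA2.
  assert (CCv * (Rabs u + Rabs (y - y0) + Q * BBv * Rabs eps) < Rabs S0).
  { assert (CCv * Rabs u <= CCv * r) by (apply Rmult_le_compat_l; lra).
    assert (CCv * Rabs (y - y0) <= CCv * s) by (apply Rmult_le_compat_l; lra).
    assert (CCv * (Q * BBv * Rabs eps) <= CCv * (Q * BBv * e)) by (apply Rmult_le_compat_l; [lra|]; apply Rmult_le_compat_l; nra).
    nra. }
  fold Q BBv CCv in HA2. lra.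
Qed.

Lemma lt_div_mult Y t X : 0 < Y -> t < X / Y -> Y * t < X.
Proof. intros HY H. apply Rmult_lt_compat_l with (r := Y) in H; [|lra]. replace (Y * (X / Y)) with X in H by (field; lra). lra. Qed.

Lemma small_bound Kx Ky eta t : 0 <= Kx -> 0 <= Ky -> 0 < eta -> 0 <= t -> t < eta / (Kx + Ky + 1) -> Kx * t < eta /\ Ky * t < eta.
Proof.
  intros. pose proof (lt_div_mult (Kx + Ky + 1) t eta ltac:(lra) H3). split; nra.
Qed.

Lemma part_i : sumk q (fun k => f (xs k)) = 0 ->
   sumk q (fun k => Derive f (xs k)) * sumk q (fun k => Derive (om (alpha k)) y0) <> 0 ->
   exists eps0, 0 < eps0 /\
   exists U : R * R -> Prop, is_nbhd U (x0, y0) /\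
   exists xe ye : R -> R,
     (forall eps, 0 < Rabs eps < eps0 ->
        0 <= xe eps < 1 /\ U (xe eps, ye eps) /\
        Nat.iter q (Tmap d b om f eps) (xe eps, ye eps) = (xe eps, ye eps) /\
        (forall x y, 0 <= x < 1 -> U (x, y) ->
           Nat.iter q (Tmap d b om f eps) (x, y) = (x, y) -> x = xe eps /\ y = ye eps)) /\
     (forall eps, 0 < Rabs eps < eps0 ->
        forall eta, 0 < eta -> exists delta, 0 < delta /\
          forall eps', 0 < Rabs eps' < eps0 -> Rabs (eps' - eps) < delta ->
            cdist (xe eps') (xe eps) < eta /\ Rabs (ye eps' - ye eps) < eta) /\
     (forall eta, 0 < eta -> exists delta, 0 < delta /\
        forall eps, 0 < Rabs eps < Rmin delta eps0 ->
          cdist (xe eps) x0 < eta /\ Rabs (ye eps - y0) < eta).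
Proof.
  intros HS0 HM. rewrite <- shift_sum in HS0.
  assert (Hcs : sumk q g_ = sumk q (fun k => Derive f (xs k))) by (apply (shift_sum (Derive f))).
  set (ca := sumk q a_). set (cc := sumk q g_).
  assert (HM' : cc * ca <> 0) by (unfold cc; rewrite Hcs; exact HM).
  assert (Hca : ca <> 0) by (intro H; apply HM'; rewrite H; ring).
  assert (Hcc : cc <> 0) by (intro H; apply HM'; rewrite H; ring).
  assert (HA : 0 < Rabs ca) by (apply Rabs_pos_lt; auto).
  assert (HCc : 0 < Rabs cc) by (apply Rabs_pos_lt; auto).
  destruct (margins d pa pb b om q x0 y0 alpha Hfam Hq Hy0 Hint) as [rm [Hrm Hm]].
  pose proof Qr_ge1 as HQ. pose proof LL_ge1 as HL. pose proof Kc_nonneg as HK0.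
  pose proof (BB_pos Kc HK0) as HB. pose proof (CC_pos q Kc HK0) as HC.
  set (Q := Qr q) in *. set (LLv := LL Kc) in *. set (BBv := BB Kc) in *. set (CCv := CC q Kc) in *.
  assert (HQB : 0 < Q * BBv) by nra. assert (HQL : 0 < Q * LLv) by nra.
  assert (HQQLL : 0 < Q * Q * LLv * LLv) by (replace (Q * Q * LLv * LLv) with ((Q * LLv) * (Q * LLv)) by ring; apply Rmult_lt_0_compat; lra).
  assert (HQ3L3 : 0 < Q * Q * Q * LLv * LLv * LLv) by (replace (Q * Q * Q * LLv * LLv * LLv) with ((Q * Q * LLv * LLv) * (Q * LLv)) by ring; apply Rmult_lt_0_compat; lra).
  assert (HQ3L2B : 0 < Q * Q * Q * LLv * LLv * BBv) by (replace (Q * Q * Q * LLv * LLv * BBv) with ((Q * Q * LLv * LLv) * (Q * BBv)) by ring; apply Rmult_lt_0_compat; lra).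
  assert (HQ2LB : 0 < Q * Q * LLv * BBv) by (replace (Q * Q * LLv * BBv) with ((Q * LLv) * (Q * BBv)) by ring; apply Rmult_lt_0_compat; lra).
  assert (HKL : Kc <= LLv) by (unfold LLv, LL; lra).
  set (eta := Rmin 1 (Rmin ((Rabs ca / 8) / Q) ((Rabs cc / 16) / Q))).
  assert (Heta0 : 0 < eta) by (unfold eta; repeat apply rmin_pos; repeat apply div_pos'; lra).
  assert (Heta1 : eta <= 1) by (unfold eta; mintac).
  assert (Heta2 : Q * eta <= Rabs ca / 8) by (apply le_div_mult; [lra|]; unfold eta; mintac).
  assert (Heta3 : Q * eta <= Rabs cc / 16) by (apply le_div_mult; [lra|]; unfold eta; mintac).
  destruct (lin_w d pa pb b om q x0 y0 alpha Hfam Hy0 Hint eta Heta0) as [sw [Hsw HWw]].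
  destruct (lin_f d b om f q x0 y0 Hf eta Heta0) as [rf [Hrf HFf]].
  set (rho := Rmin (Rmin rf (rm / 2)) (1 / 4)).
  assert (Hrho : 0 < rho) by (unfold rho; repeat apply rmin_pos; lra).
  assert (Hrho1 : rho <= rf) by (unfold rho; mintac).
  assert (Hrho2 : rho <= rm / 2) by (unfold rho; mintac).
  assert (Hrho3 : rho <= 1 / 4) by (unfold rho; mintac).
  set (sig := Rmin (Rmin sw (rm / 2)) (rho / (2 * (Q * LLv)))).
  assert (Hsig : 0 < sig) by (unfold sig; repeat apply rmin_pos; try apply div_pos'; nra).
  assert (Hsig1 : sig <= sw) by (unfold sig; mintac).
  assert (Hsig2 : sig <= rm / 2) by (unfold sig; mintac).
  assert (Hsig3 : (2 * (Q * LLv)) * sig <= rho) by (apply le_div_mult; [nra|]; unfold sig; mintac).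
  set (tau0 := Rmin 1 (Rmin (1 / (Q * LLv)) (Rmin ((Rabs ca / 4) / (Q * LLv))
     (Rmin ((Rabs cc / 8) / (Q * Q * LLv * LLv)) ((Rabs ca * Rabs cc / 16) / (Q * Q * Q * LLv * LLv * LLv)))))).
  assert (Ht0 : 0 < tau0) by (unfold tau0; repeat apply rmin_pos; repeat apply div_pos'; nra).
  set (r := rho / 2).
  assert (Hr : 0 < r) by (unfold r; lra).
  set (s := Rmin (sig / 2) ((Rabs cc * r / 16) / (Q * Q * LLv * LLv))).
  assert (Hs : 0 < s) by (unfold s; apply rmin_pos; repeat apply div_pos'; nra).
  assert (Hs1 : s <= sig / 2) by (unfold s; mintac).
  assert (Hs2 : (Q * Q * LLv * LLv) * s <= Rabs cc * r / 16) by (apply le_div_mult; [lra|]; unfold s; mintac).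
  set (e := Rmin (Rmin 1 ((sig / 2) / (Q * BBv))) (Rmin (tau0 / CCv) (Rmin ((Rabs cc * r / 32) / (Q * Q * Q * LLv * LLv * BBv))
              ((Rabs ca * s / 8) / (Q * Q * LLv * BBv))))).
  assert (He : 0 < e) by (unfold e; repeat apply rmin_pos; repeat apply div_pos'; nra).
  assert (He1 : e <= 1) by (unfold e; mintac).
  assert (He2 : (Q * BBv) * e <= sig / 2) by (apply le_div_mult; [nra|]; unfold e; mintac).
  assert (He3 : CCv * e <= tau0) by (apply le_div_mult; [lra|]; unfold e; mintac).
  assert (He4 : (Q * Q * Q * LLv * LLv * BBv) * e <= Rabs cc * r / 32) by (apply le_div_mult; [lra|]; unfold e; mintac).
  assert (He5 : (Q * Q * LLv * BBv) * e <= Rabs ca * s / 8) by (apply le_div_mult; [lra|]; unfold e; mintac).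
  set (tv := tau q Kc e).
  assert (Htv : tv = CCv * e) by (unfold tv, tau; fold CCv; ring).
  assert (Htv0 : 0 <= tv) by (rewrite Htv; nra).
  assert (Htv1 : tv <= 1) by (assert (tau0 <= 1) by (unfold tau0; mintac); lra).
  assert (Htv2 : (Q * LLv) * tv <= 1) by (apply le_div_mult; [lra|]; assert (tau0 <= 1 / (Q * LLv)) by (unfold tau0; mintac); lra).
  assert (Htv3 : (Q * LLv) * tv <= Rabs ca / 4) by (apply le_div_mult; [lra|]; assert (tau0 <= (Rabs ca / 4) / (Q * LLv)) by (unfold tau0; mintac); lra).
  assert (Htv4 : (Q * Q * LLv * LLv) * tv <= Rabs cc / 8) by (apply le_div_mult; [lra|]; assert (tau0 <= (Rabs cc / 8) / (Q * Q * LLv * LLv)) by (unfold tau0; mintac); lra).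
  assert (Htv5 : (Q * Q * Q * LLv * LLv * LLv) * tv <= Rabs ca * Rabs cc / 16) by (apply le_div_mult; [lra|]; assert (tau0 <= (Rabs ca * Rabs cc / 16) / (Q * Q * Q * LLv * LLv * LLv)) by (unfold tau0; mintac); lra).
  assert (HW : forall k z z', (k < q)%nat -> Rabs (z - y0) <= sig -> Rabs (z' - y0) <= sig ->
    Rabs (ww k z - ww k z' - a_ k * (z - z')) <= eta * Rabs (z - z')).
  { intros k z z' Hk Hz Hz'. apply HWw; auto; lra. }
  assert (HF : forall k v v', (k < q)%nat -> Rabs v <= rho -> Rabs v' <= rho ->
    Rabs (f (Pk k + v) - f (Pk k + v') - g_ k * (v - v')) <= eta * Rabs (v - v')).
  { intros k v v' Hk Hv Hv'. apply HFf; auto; lra. }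
  assert (Heta : 0 <= eta <= 1) by lra.
  assert (Hrho' : 0 < rho <= 1) by lra.
  assert (Hr2 : r <= rho / 2) by (unfold r; lra).
  assert (Hqs : Q * LLv * sig <= rho / 2) by lra.
  assert (Hqe : e * Q * BBv <= sig / 2) by (replace (e * Q * BBv) with ((Q * BBv) * e) by ring; lra).
  set (D := Dfun ww Pk f q y0). set (A := Afun ww Pk f q y0).
  set (lam := Q * LLv * tv). set (lame := Q * LLv * (tv * Q * BBv + Q * BBv)).
  set (mu := Q * Q * LLv * LLv * (1 + tv)). set (mue := Q * Q * LLv * LLv * (tv + 1) * Q * BBv).
  assert (Hlam : 0 <= lam) by (unfold lam; apply Rmult_le_pos; lra).
  assert (Hlame : 0 <= lame) by (unfold lame; apply Rmult_le_pos; [lra|]; assert (0 <= tv * Q * BBv) by (apply Rmult_le_pos; nra); nra).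
  assert (Hmu : 0 <= mu) by (unfold mu; apply Rmult_le_pos; lra).
  assert (Hmue : 0 <= mue) by (unfold mue; replace (Q * Q * LLv * LLv * (tv + 1) * Q * BBv) with ((Q * Q * LLv * LLv) * (tv + 1) * (Q * BBv)) by ring;
    apply Rmult_le_pos; [apply Rmult_le_pos|]; lra).
  assert (HD1 : forall u y y' ep, Rabs u <= r -> Rabs (y - y0) <= s -> Rabs (y' - y0) <= s -> Rabs ep <= e ->
    Rabs (D u y ep - D u y' ep - ca * (y - y')) <= Rabs ca / 2 * Rabs (y - y')).
  { intros u y y' ep Hu Hy Hy' Hep.
    eapply Rle_trans. apply (est_D1 ww Pk f q y0 rho sig eta Kc a_ g_ HW HF Kc_bound Heta Hrho' Hsig HK0 r s e He Hr2 Hs1 Hqs Hqe He1 u y y' ep);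
      (split; [|split]; auto).
    fold Q. fold tv. apply (ineqD1 Q eta tv Kc LLv); auto; try lra. apply Rabs_pos. }
  assert (HD2 : forall u u' y ep ep', Rabs u <= r -> Rabs u' <= r -> Rabs (y - y0) <= s -> Rabs ep <= e -> Rabs ep' <= e ->
    Rabs (D u y ep - D u' y ep') <= lam * Rabs (u - u') + lame * Rabs (ep - ep')).
  { intros u u' y ep ep' Hu Hu' Hy Hep Hep'.
    apply (est_D2 ww Pk f q y0 rho sig eta Kc a_ g_ HW HF Kc_bound Heta Hrho' Hsig HK0 r s e He Hr2 Hs1 Hqs Hqe He1 u u' y ep ep');
      (split; [|split]; auto). }
  assert (HA1 : forall u u' y ep, Rabs u <= r -> Rabs u' <= r -> Rabs (y - y0) <= s -> Rabs ep <= e ->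
    Rabs (A u y ep - A u' y ep - cc * (u - u')) <= Rabs cc / 4 * Rabs (u - u')).
  { intros u u' y ep Hu Hu' Hy Hep.
    eapply Rle_trans. apply (est_A1 ww Pk f q y0 rho sig eta Kc a_ g_ HW HF Kc_bound Heta Hrho' Hsig HK0 r s e He Hr2 Hs1 Hqs Hqe He1 u u' y ep);
      (split; [|split]; auto).
    fold Q LLv tv. apply ineqA1; auto; try lra. apply Rabs_pos. }
  assert (HA2 : forall u y y' ep ep', Rabs u <= r -> Rabs (y - y0) <= s -> Rabs (y' - y0) <= s -> Rabs ep <= e -> Rabs ep' <= e ->
    Rabs (A u y ep - A u y' ep') <= mu * Rabs (y - y') + mue * Rabs (ep - ep')).
  { intros u y y' ep ep' Hu Hy Hy' Hep Hep'.
    apply (est_A2 ww Pk f q y0 rho sig eta Kc a_ g_ HW HF Kc_bound Heta Hrho' Hsig HK0 r s e He Hr2 Hs1 Hqs Hqe He1 u y y' ep ep');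
      (split; [|split]; auto). }
  assert (HD0 : forall u, Rabs u <= r -> D u y0 0 = 0) by (intros; apply (base_D ww Pk f q y0 r); auto).
  assert (HA0 : A 0 y0 0 = 0) by (unfold A; rewrite base_A; exact HS0).
  assert (HS : 8 * (mu * lam) <= Rabs ca * Rabs cc) by (unfold mu, lam; apply ineqS; auto; lra).
  assert (HE1 : 2 * (lame * e) < Rabs ca * s) by (unfold lame; apply ineqE1; try lra; nra).
  assert (HE2 : 4 * (mu * s + mue * e) < Rabs cc * r) by (unfold mu, mue; apply ineqE2; try lra; nra).
  pose proof (exists_sol D A y0 ca cc r s e lam lame mu mue Hca Hcc Hr Hs He Hlam Hlame Hmu Hmue HD1 HD2 HA1 HA2 HD0 HA0 HE1 HE2) as Hex.
  destruct (fchoice (fun ep (p : R * R) => Rabs ep <= e -> Rabs (fst p) < r /\ Rabs (snd p - y0) < s /\ D (fst p) (snd p) ep = 0 /\ A (fst p) (snd p) ep = 0)) as [Z HZ].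
  { intros ep. destruct (Rle_or_lt (Rabs ep) e) as [H|H].
    - destruct (Hex ep H) as [u [y Hu]]. exists (u, y). intros _. exact Hu.
    - exists (0, y0). intros; lra. }
  set (K1v := K1 ca cc lame mu mue).
  assert (HK1 : 0 <= K1v).
  { unfold K1v, K1. unfold Rdiv. apply Rmult_le_pos. assert (0 <= mu * lame) by nra. assert (0 <= Rabs ca * mue) by nra. lra.
    left. apply Rinv_0_lt_compat. nra. }
  set (Kyv := 2 * (lam * K1v + lame) / Rabs ca).
  assert (HKy : 0 <= Kyv).
  { unfold Kyv. unfold Rdiv. apply Rmult_le_pos. nra. left. apply Rinv_0_lt_compat. lra. }
  assert (Hsl : forall u y ep u' y' ep', Rabs u <= r -> Rabs (y - y0) <= s -> Rabs ep <= e -> Rabs u' <= r -> Rabs (y' - y0) <= s -> Rabs ep' <= e ->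
     D u y ep = 0 -> A u y ep = 0 -> D u' y' ep' = 0 -> A u' y' ep' = 0 ->
     Rabs (u - u') <= K1v * Rabs (ep - ep') /\ Rabs (y - y') <= Kyv * Rabs (ep - ep')).
  { intros u y ep u' y' ep' H1 H2 H3 H4 H5 H6 H7 H8 H9 H10.
    destruct (sol_lip D A y0 ca cc r s e lam lame mu mue Hca Hcc Hmu HD1 HD2 HA1 HA2 HS u y ep u' y' ep' H1 H2 H3 H4 H5 H6 H7 H8 H9 H10) as [G1 G2].
    fold K1v in G1. split; auto.
    apply Rmult_le_reg_l with (Rabs ca / 2). lra.
    replace (Rabs ca / 2 * (Kyv * Rabs (ep - ep'))) with (lam * (K1v * Rabs (ep - ep')) + lame * Rabs (ep - ep')) by (unfold Kyv; field; lra).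
    assert (lam * Rabs (u - u') <= lam * (K1v * Rabs (ep - ep'))) by (apply Rmult_le_compat_l; auto).
    lra. }
  assert (Hx0f : frac_part x0 = x0) by (apply frac_id; auto).
  assert (Hcd : forall a' b', cdist (frac_part (x0 + a')) (frac_part (x0 + b')) <= Rabs (a' - b')).
  { intros. eapply Rle_trans; [apply cdist_frac|]. right. f_equal. ring. }
  assert (Hcd0 : forall a', cdist (frac_part (x0 + a')) x0 <= Rabs a').
  { intros. pose proof (Hcd a' 0). rewrite Rplus_0_r, Hx0f, Rminus_0_r in H. exact H. }
  assert (H0r : Rabs 0 <= r) by (rewrite Rabs_R0; lra).
  assert (H0s : Rabs (y0 - y0) <= s) by (rewrite Rminus_diag, Rabs_R0; lra).
  assert (H0e : Rabs 0 <= e) by (rewrite Rabs_R0; lra).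
  assert (Hfixu : forall u y eps, inbox y0 r s e u y eps -> (Nat.iter q (Tmap d b om f eps) (frac_part (x0 + u), y) = (frac_part (x0 + u), y) <-> D u y eps = 0 /\ eps * A u y eps = 0)).
  { intros u y eps Hb. apply (box_fix rm rho sig eta r s e Hrm Hm HW HF Heta Hrho' Hsig He Hr2 Hs1 Hqs Hqe Hrho3 Hrho2 Hsig2 u y eps Hb). }
  clearbody D A K1v Kyv r s e.
  clear - HZ Hsl Hfixu HD0 HA0 Hr Hs He HK1 HKy Hx0 Hcd Hcd0 H0r H0s H0e.
  exists e. split; auto.
  exists (fun p => 0 <= fst p < 1 /\ cdist (fst p) x0 < r /\ Rabs (snd p - y0) < s).
  split.
  { exists (Rmin r s). split. apply rmin_pos; auto. intros x y Hx Hc Hy. cbn [fst snd] in *.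
    split; auto. split. pose proof (Rmin_l r s); lra. pose proof (Rmin_r r s); lra. }
  exists (fun ep => frac_part (x0 + fst (Z ep))), (fun ep => snd (Z ep)).
  split; [|split].
  - intros eps [Hep0 Hep]. destruct (HZ eps ltac:(lra)) as [Hu [Hy [HDz HAz]]].
    set (u := fst (Z eps)) in *. set (y := snd (Z eps)) in *.
    assert (Hb : inbox y0 r s e u y eps) by (split; [|split]; lra).
    pose proof (Hfixu u y eps Hb) as Hfx.
    split. apply frac_range. split.
    { cbn [fst snd]. split; [apply frac_range|]. split; [|lra]. eapply Rle_lt_trans; [apply Hcd0|]; lra. }
    split.
    { apply Hfx. split; [exact HDz|]. rewrite HAz. ring. }
    intros x y' Hx [_ [Hcdx Hyx]] Hfix. cbn [fst snd] in Hcdx, Hyx.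
    destruct (cdist_disp x x0 r Hx Hx0 Hcdx) as [u' [Hu' Hxu]]. subst x.
    assert (Hb' : inbox y0 r s e u' y' eps) by (split; [|split]; lra).
    apply (Hfixu u' y' eps Hb') in Hfix.
    destruct Hfix as [HD' HA'].
    apply Rmult_integral in HA'. destruct HA' as [HA'|HA']. rewrite HA', Rabs_R0 in Hep0; lra.
    destruct (Hsl u' y' eps u y eps ltac:(lra) ltac:(lra) ltac:(lra) ltac:(lra) ltac:(lra) ltac:(lra) HD' HA' HDz HAz) as [G1 G2].
    rewrite Rminus_diag, Rabs_R0, Rmult_0_r in G1, G2.
    assert (u' = u) by (pose proof (Rabs_pos (u' - u)); assert (Rabs (u' - u) = 0) by lra; apply Rabs_eq_0 in H0; lra).
    assert (y' = y) by (pose proof (Rabs_pos (y' - y)); assert (Rabs (y' - y) = 0) by lra; apply Rabs_eq_0 in H1; lra).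
    subst u' y'. split; reflexivity.
  - intros eps [Hep0 Hep] eta' Heta'. exists (eta' / (K1v + Kyv + 1)). split. apply div_pos'; lra.
    intros eps' [Hep0' Hep'] Hd.
    destruct (HZ eps ltac:(lra)) as [Hu [Hy [HDz HAz]]].
    destruct (HZ eps' ltac:(lra)) as [Hu' [Hy' [HDz' HAz']]].
    destruct (Hsl (fst (Z eps')) (snd (Z eps')) eps' (fst (Z eps)) (snd (Z eps)) eps ltac:(lra) ltac:(lra) ltac:(lra) ltac:(lra) ltac:(lra) ltac:(lra) HDz' HAz' HDz HAz) as [G1 G2].
    destruct (small_bound K1v Kyv eta' (Rabs (eps' - eps)) HK1 HKy Heta' (Rabs_pos _) Hd) as [S1 S2].
    split. eapply Rle_lt_trans; [apply Hcd|]. lra. lra.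
  - intros eta' Heta'. exists (eta' / (K1v + Kyv + 1)). split. apply div_pos'; lra.
    intros eps [Hep0 Hep].
    assert (Hep1 : Rabs eps < eta' / (K1v + Kyv + 1)) by (pose proof (Rmin_l (eta' / (K1v + Kyv + 1)) e); lra).
    assert (Hep2 : Rabs eps < e) by (pose proof (Rmin_r (eta' / (K1v + Kyv + 1)) e); lra).
    destruct (HZ eps ltac:(lra)) as [Hu [Hy [HDz HAz]]].
    destruct (Hsl (fst (Z eps)) (snd (Z eps)) eps 0 y0 0 ltac:(lra) ltac:(lra) ltac:(lra) H0r H0s H0e HDz HAz (HD0 0 H0r) HA0) as [G1 G2].
    rewrite !Rminus_0_r in G1. rewrite !Rminus_0_r in G2.
    destruct (small_bound K1v Kyv eta' (Rabs eps) HK1 HKy Heta' (Rabs_pos _) Hep1) as [S1 S2].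
    split. eapply Rle_lt_trans; [apply Hcd0|]. lra. lra.
Qed.

End Main.


Theorem mainTheorem15
  (d : nat) (pa pb : Rbar) (b om : nat -> R -> R) (f : R -> R)
  (q : nat) (x0 y0 : R) (alpha : nat -> nat)
  (Hfam : IEM_family d pa pb b om)
  (Hf : smooth f) (Hfper : forall x, f (x + 1) = f x)
  (Hq : (1 <= q)%nat)
  (Hy0 : inP pa pb y0)
  (Hx0 : 0 <= x0 < 1)
  (Hper : Nat.iter q (IEM d b om y0) x0 = x0)
  (Hmin : forall k, (0 < k < q)%nat -> Nat.iter k (IEM d b om y0) x0 <> x0)
  (Hint : forall k, (k < q)%nat ->
     (alpha k < d)%nat /\
     b (alpha k) y0 < lift b y0 (Nat.iter k (IEM d b om y0) x0) < b (S (alpha k)) y0) :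
  let xs := fun k => Nat.iter k (IEM d b om y0) x0 in
  let M := sumk q (fun k => Derive f (xs k)) *
           sumk q (fun k => Derive (om (alpha k)) y0) in
  let T := fun eps => Tmap d b om f eps in
  (* (i) *)
  (sumk q (fun k => f (xs k)) = 0 -> M <> 0 ->
   exists eps0, 0 < eps0 /\
   exists U : R * R -> Prop, is_nbhd U (x0, y0) /\
   exists xe ye : R -> R,
     (forall eps, 0 < Rabs eps < eps0 ->
        0 <= xe eps < 1 /\ U (xe eps, ye eps) /\
        Nat.iter q (T eps) (xe eps, ye eps) = (xe eps, ye eps) /\
        (forall x y, 0 <= x < 1 -> U (x, y) ->
           Nat.iter q (T eps) (x, y) = (x, y) -> x = xe eps /\ y = ye eps)) /\
     (forall eps, 0 < Rabs eps < eps0 ->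
        forall eta, 0 < eta -> exists delta, 0 < delta /\
          forall eps', 0 < Rabs eps' < eps0 -> Rabs (eps' - eps) < delta ->
            cdist (xe eps') (xe eps) < eta /\ Rabs (ye eps' - ye eps) < eta) /\
     (forall eta, 0 < eta -> exists delta, 0 < delta /\
        forall eps, 0 < Rabs eps < Rmin delta eps0 ->
          cdist (xe eps) x0 < eta /\ Rabs (ye eps - y0) < eta))
  /\
  (* (ii) *)
  (sumk q (fun k => f (xs k)) <> 0 ->
   exists eps0, 0 < eps0 /\
   exists U : R * R -> Prop, is_nbhd U (x0, y0) /\
   forall eps, 0 < Rabs eps < eps0 ->
     forall x y, 0 <= x < 1 -> U (x, y) -> Nat.iter q (T eps) (x, y) <> (x, y)).
Proof.
  intros xs M T. split.
  - intros HS0 HM. apply (part_i d pa pb b om f q x0 y0 alpha); assumption.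
  - intros HS0. apply (part_ii d pa pb b om f q x0 y0 alpha); assumption.
Qed.
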